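(* Let $R$ be a Dedekind domain and let $A$ be a torsion-free $R$-module of finite rank. The following are equivalent: (a) $A$ is a self-pure-generator; (b) every pure submodule of $A$ of rank $1$ is $A$-generated; (c) $A$ has a quasi-direct summand $B$ of rank $1$ such that $\mathbf{type}(B)=\mathbf{IT}(A)$; (d) $A$ has a direct summand $B$ of rank $1$ such that $\mathbf{type}(B)=\mathbf{IT}(A)$.
   Context: $R$ is a Dedekind domain with quotient field $\mathbf{Q}$. A torsion-free $R$-module has rank $n$ if it embeds as an essential submodule of $\mathbf{Q}^n$. For a module $A$, a submodule $K$ is $A$-generated if there is an epimorphism $A^{(I)}\to K$ for some set $I$. $A$ is a self-pure-generator if every pure submodule of $A$ is $A$-generated. For $X\subseteq A$, $\langle X\rangle_\star$ denotes the pure submodule of $A$ generated by $X$. Two submodules $A,C$ of a $\mathbf{Q}$-vector space are quasi-equal if $\mathbf{Q}A=\mathbf{Q}C$ and $rC\le A$, $sA\le C$ for some nonzero $r,s\in R$. A quasi-homomorphism $A\to B$ is an element of $\mathbf{Q}\otimes_R\operatorname{Hom}(A,B)$; a quasi-isomorphism is an isomorphism in the category of finite rank torsion-free modules with these morphisms (equivalently, an injective homomorphism $f:A\to B$ with $f(A)$ quasi-equal to $B$, up to rescaling). $B$ is a quasi-direct summand of $A$ if there is a submodule $B'\oplus C\le A$ quasi-equal to $A$ with $B'$ quasi-isomorphic to $B$. The type $\mathbf{type}(B)$ of a rank $1$ torsion-free module $B$ is its quasi-isomorphism class; types are partially ordered by $\mathbf{type}(B)\le\mathbf{type}(C)$ iff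 there is a monomorphism $B\to C$, and form a lattice (for $B,C\le\mathbf{Q}$: $\inf=\mathbf{type}(B\cap C)$). For $0\ne a\in A$, $\mathbf{type}(a)=\mathbf{type}(\langle a\rangle_\star)$. The inner type $\mathbf{IT}(A)=\inf\{\mathbf{type}(x_1),\dots,\mathbf{type}(x_n)\}$ for a maximal independent system $x_1,\dots,x_n$ of $A$; it is independent of the choice and equals the greatest lower bound of the types of all nonzero elements of $A$. *)

(* Defs.v *)
From HB Require Import structures.
From mathcomp Require Import all_boot all_order all_algebra.
From mathcomp Require Import fraction.
From Stdlib Require List.
Set Implicit Arguments. Unset Strict Implicit. Unset Printing Implicit Defensive.
Import GRing.Theory.
Local Open Scope ring_scope.

(* Every torsion-free R-module of finite rank is (up to isomorphism) an
   R-submodule of Q^n = 'rV[{fraction R}]_n; all modules below are such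
   submodules, represented as Prop-valued subsets of 'rV_n. *)

Section Defs.
Variable R : idomainType.
Local Notation Q := {fraction R}.
Local Notation "x %:F" := (@tofrac R x).

Definition is_ideal (I : R -> Prop) :=
  I 0 /\ (forall x y, I x -> I y -> I (x + y)) /\ (forall r x, I x -> I (r * x)).
Definition fin_gen_ideal (I : R -> Prop) :=
  exists s : seq R, forall x,
    I x <-> exists c : 'I_(size s) -> R, x = \sum_(i < size s) c i * s`_i.
Definition noetherian_dom := forall I, is_ideal I -> fin_gen_ideal I.
Definition prime_ideal (I : R -> Prop) :=
  is_ideal I /\ ~ I 1 /\ (forall a b, I (a * b) -> I a \/ I b).
Definition maximal_ideal (I : R -> Prop) :=
  is_ideal I /\ ~ I 1 /\
  (forall J, is_ideal J -> (forall x, I x -> J x) -> (forall x, J x -> I x) \/ J 1).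
Definition integrally_closed_dom :=
  forall (x : Q) (p : {poly R}), p \is monic -> root (map_poly (@tofrac R) p) x ->
    exists r : R, x = r%:F.
Definition dedekind :=
  [/\ noetherian_dom, integrally_closed_dom &
      forall P, prime_ideal P -> (exists x, P x /\ x != 0) -> maximal_ideal P].

Definition vset (n : nat) := 'rV[Q]_n -> Prop.
Definition smul n (r : R) (v : 'rV[Q]_n) := r%:F *: v.

Definition submod n (A : vset n) :=
  A 0 /\ (forall x y, A x -> A y -> A (x + y)) /\ (forall r x, A x -> A (smul r x)).
Definition vsubset n (B A : vset n) := forall x, B x -> A x.
Definition submodule_of n (B A : vset n) := submod B /\ vsubset B A.

(* pure submodule: rA \cap B = rB for all r in R *)
Definition pure_in n (B A : vset n) :=
  submodule_of B A /\
  forall (r : R) a, A a -> B (smul r a) -> exists b, B b /\ smul r a = smul r b.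

Definition pure_hull n (A X : vset n) : vset n :=
  fun x => forall P, pure_in P A -> vsubset X P -> P x.
Definition elem_hull n (A : vset n) (a : 'rV[Q]_n) : vset n :=
  pure_hull A (fun x => x = a).

(* R-homomorphisms B -> C (only the values on B matter) *)
Definition hom n m (B : vset n) (C : vset m) (f : 'rV[Q]_n -> 'rV[Q]_m) :=
  [/\ forall x y, B x -> B y -> f (x + y) = f x + f y,
      forall r x, B x -> f (smul r x) = smul r (f x) &
      forall x, B x -> C (f x)].
Definition mono n m (B : vset n) (C : vset m) f :=
  hom B C f /\ forall x y, B x -> B y -> f x = f y -> x = y.

(* K is A-generated: an epimorphism A^(I) -> K, i.e. a family (f_i)_{i in I}
   of homomorphisms A -> K such that the induced map from the direct sum
   A^(I) is onto K. *)
Definition generated_by n m (A : vset n) (C : vset m) :=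
  exists (I : Type) (f : I -> 'rV[Q]_n -> 'rV[Q]_m),
    (forall i, hom A C (f i)) /\
    forall y, C y -> exists s : seq (I * 'rV[Q]_n),
      List.Forall (fun p => A p.2) s /\ y = \sum_(p <- s) f p.1 p.2.

Definition self_pure_generator n (A : vset n) :=
  forall P, pure_in P A -> generated_by A P.

Definition rank1 n (B : vset n) :=
  submod B /\ exists b0, [/\ B b0, b0 != 0 &
     forall b, B b -> exists c : Q, b = c *: b0].

(* type(B) <= type(C) iff there is a monomorphism B -> C *)
Definition type_le n m (B : vset n) (C : vset m) := exists f, mono B C f.

(* type(B) = IT(A): type(B) is the greatest lower bound of the types
   type(a) = type(<a>_* ) of the nonzero elements a of A *)
Definition type_is_IT n m (A : vset n) (B : vset m) :=
  [/\ rank1 B,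
      forall a, A a -> a != 0 -> type_le B (elem_hull A a) &
      forall m' (C : vset m'), rank1 C ->
        (forall a, A a -> a != 0 -> type_le C (elem_hull A a)) -> type_le C B].

Definition qspan n (A : vset n) : vset n :=
  fun x => exists (c : Q) a, A a /\ x = c *: a.
Definition quasi_equal n (A C : vset n) :=
  (forall x, qspan A x <-> qspan C x) /\
  exists r s : R, [/\ r != 0, s != 0,
     (forall c, C c -> A (smul r c)) & (forall a, A a -> C (smul s a))].
(* isomorphism in the category with morphisms Q \otimes Hom *)
Definition quasi_iso n m (B : vset n) (C : vset m) :=
  exists f g (r s : R), [/\ hom B C f, hom C B g, r != 0 & s != 0] /\
     (forall x, B x -> g (f x) = smul r x) /\ (forall y, C y -> f (g y) = smul s y).

Definition sum_set n (B C : vset n) : vset n :=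
  fun x => exists b c, [/\ B b, C c & x = b + c].
Definition indep n (B C : vset n) := forall x, B x -> C x -> x = 0.

Definition quasi_summand n m (A : vset n) (B : vset m) :=
  exists B' C : vset n, [/\ submodule_of B' A, submodule_of C A, indep B' C,
     quasi_equal (sum_set B' C) A & quasi_iso B' B].

Definition direct_summand n (A B : vset n) :=
  submodule_of B A /\ exists C, [/\ submodule_of C A, indep B C &
     forall a, A a <-> sum_set B C a].

End Defs.

(* Main.v *)
Require Import Defs.
From HB Require Import structures.
From mathcomp Require Import all_boot all_order all_algebra.
From mathcomp Require Import fraction ring.
From Stdlib Require Import Classical ClassicalEpsilon FunctionalExtensionality PropExtensionality.
From Stdlib Require List.
Require Import Defs.
Set Implicit Arguments. Unset Strict Implicit. Unset Printing Implicit Defensive.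
Import GRing.Theory.
Local Open Scope ring_scope.

Section Ded.
Variable R : idomainType.
Local Notation K := {fraction R}.
Local Notation "x %:F" := (@tofrac R x).

Lemma fracE (x : K) : exists a b : R, b != 0 /\ x = a%:F / b%:F.
Proof.
elim/quotW: x => r.
exists r.1, r.2; split; first exact: denom_ratioP.
unlock tofrac.
rewrite -[X in _ = _ * X]/(FracField.inv _) -FracField.pi_inv.
rewrite -[X in _ = X]/(FracField.mul _ _) -FracField.pi_mul.
apply/eqmodP; rewrite /= FracField.equivfE /FracField.invf /FracField.mulf /=.
rewrite !numden_Ratio ?oner_neq0 ?denom_ratioP ?mul1r ?mulr1 1?mulrC //.
all: exact: denom_ratioP.
Qed.

Definition sub_id (I J : R -> Prop) := forall x, I x -> J x.

Lemma ideal0 (I : R -> Prop) : is_ideal I -> I 0. Proof. by case. Qed.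
Lemma idealD (I : R -> Prop) x y : is_ideal I -> I x -> I y -> I (x + y).
Proof. by case=> _ [H _]; apply: H. Qed.
Lemma idealM (I : R -> Prop) r x : is_ideal I -> I x -> I (r * x).
Proof. by case=> _ [_ H]; apply: H. Qed.
Lemma idealMr (I : R -> Prop) r x : is_ideal I -> I x -> I (x * r).
Proof. by move=> II Ix; rewrite mulrC; apply: idealM. Qed.
Lemma idealN (I : R -> Prop) x : is_ideal I -> I x -> I (- x).
Proof. by move=> II Ix; rewrite -mulN1r; apply: idealM. Qed.
Lemma idealB (I : R -> Prop) x y : is_ideal I -> I x -> I y -> I (x - y).
Proof. by move=> II Ix Iy; apply: idealD => //; apply: idealN. Qed.

Lemma ideal_big (I : R -> Prop) (m : nat) (F : 'I_m -> R) : is_ideal I ->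
  (forall i, I (F i)) -> I (\sum_(i < m) F i).
Proof.
move=> II HF; apply: (big_ind I (ideal0 II)) => //; move=> x y; exact: idealD.
Qed.

Lemma sum_delta (s : seq R) (i : nat) (lti : (i < size s)%N) :
  s`_i = \sum_(j < size s) (if (j : nat) == i then 1 else 0) * s`_j.
Proof.
rewrite (bigD1 (Ordinal lti)) //= eqxx mul1r big1 ?addr0 // => j.
by rewrite -val_eqE /= => /negbTE ->; rewrite mul0r.
Qed.

Lemma noeth_acc (hN : noetherian_dom R) (I : nat -> R -> Prop) :
  (forall k, is_ideal (I k)) -> (forall k x, I k x -> I k.+1 x) ->
  exists k0, forall k x, I k x -> I k0 x.
Proof.
move=> Iid Imono.
have mono : forall k k' x, (k <= k')%N -> I k x -> I k' x.
  move=> k k' x /subnK <- Ix; elim: (k' - k)%N => [|d IH]; first by rewrite add0n.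
  by rewrite addSn; apply: Imono.
pose U x := exists k, I k x.
have Uid : is_ideal U.
  split; first by exists 0%N; apply: ideal0.
  split.
  - move=> x y [k1 h1] [k2 h2]; exists (maxn k1 k2); apply: idealD => //.
      by apply: (mono k1) => //; rewrite leq_maxl.
    by apply: (mono k2) => //; rewrite leq_maxr.
  - by move=> r x [k h]; exists k; apply: idealM.
have [s Hs] := hN U Uid.
have gen : forall i, (i < size s)%N -> U s`_i.
  move=> i lti; apply/(Hs _).2.
  by exists (fun j : 'I_(size s) => if (j : nat) == i then 1 else 0); apply: sum_delta.
have [k0 Hk0] : exists k0, forall i, (i < size s)%N -> I k0 s`_i.
  suff : forall N, exists k0, forall i, (i < N)%N -> (i < size s)%N -> I k0 s`_i.
    by move=> /(_ (size s)) [k0 H]; exists k0 => i lti; apply: H.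
  elim=> [|N [k0 IH]]; first by exists 0%N.
  case: (ltnP N (size s)) => [ltN|leN].
  - have [k hk] := gen N ltN.
    exists (maxn k0 k) => i; rewrite ltnS leq_eqVlt => /orP [/eqP -> _|lti lts].
      by apply: (mono k) => //; rewrite leq_maxr.
    by apply: (mono k0); [rewrite leq_maxl | apply: IH].
  - exists k0 => i; rewrite ltnS => leiN lts; apply: IH => //.
    by apply: leq_trans lts leN.
exists k0 => k x Ix.
have [c ->] := (Hs x).1 (ex_intro _ k Ix).
apply: ideal_big => // i; apply: idealM => //; apply: Hk0; exact: ltn_ord.
Qed.

Lemma noeth_max (hN : noetherian_dom R) (F : (R -> Prop) -> Prop) :
  (forall I, F I -> is_ideal I) -> (exists I, F I) ->
  exists M, F M /\ forall I, F I -> sub_id M I -> sub_id I M.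
Proof.
move=> Fid [I0 FI0]; apply: NNPP => Hno.
have step : forall M : {I | F I}, {J : {I | F I} |
    sub_id (sval M) (sval J) /\ ~ sub_id (sval J) (sval M)}.
  move=> [M FM]; apply: constructive_indefinite_description.
  apply: NNPP => H; apply: Hno; exists M; split => // I FI MI.
  apply: NNPP => nIM; apply: H; by exists (exist _ I FI).
pose f := fix f k := match k with 0%N => exist _ I0 FI0 | k.+1 => sval (step (f k)) end.
have [k0 Hk0] := noeth_acc hN (I := fun k => sval (f k))
  (fun k => Fid _ (svalP (f k))) (fun k x => (proj1 (svalP (step (f k)))) x).
apply: (proj2 (svalP (step (f k0)))) => x; exact: (Hk0 k0.+1 x).
Qed.

Lemma ideal_in_max (hN : noetherian_dom R) (I : R -> Prop) : is_ideal I -> ~ I 1 ->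
  exists P, maximal_ideal P /\ sub_id I P.
Proof.
move=> II nI1.
have [M [[MI [nM1 IM]] Mmax]] := noeth_max hN
  (F := fun J => is_ideal J /\ ~ J 1 /\ sub_id I J) (fun J h => h.1)
  (ex_intro _ I (conj II (conj nI1 (fun x h => h)))).
exists M; split => //; split => //; split => // J JI MJ.
case: (classic (J 1)) => [|nJ1]; [by right | left].
apply: Mmax => //; split => //; split => //; move=> x /IM; exact: MJ.
Qed.

Definition addel (I : R -> Prop) a := fun x => exists m r, I m /\ x = m + r * a.

Lemma ideal_addel (I : R -> Prop) a : is_ideal I -> is_ideal (addel I a).
Proof.
move=> II; split; first by exists 0, 0; rewrite mul0r addr0; split => //; apply: ideal0.
split.
- move=> x y [m [r [Im ->]]] [m' [r' [Im' ->]]]; exists (m + m'), (r + r'); split.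
    exact: idealD.
  by rewrite mulrDl addrACA.
- move=> s x [m [r [Im ->]]]; exists (s * m), (s * r); split; first exact: idealM.
  by rewrite mulrDr mulrA.
Qed.

Lemma addel_sub (I : R -> Prop) a : is_ideal I -> sub_id I (addel I a).
Proof. by move=> II x Ix; exists x, 0; rewrite mul0r addr0. Qed.

Lemma addel_el (I : R -> Prop) a : is_ideal I -> addel I a a.
Proof. by move=> II; exists 0, 1; rewrite mul1r add0r; split => //; apply: ideal0. Qed.

Lemma max_prime (P : R -> Prop) : maximal_ideal P -> prime_ideal P.
Proof.
move=> [PI [nP1 Pmax]]; split => //; split => // a b Pab.
case: (classic (P a)) => [|nPa]; [by left|right].
case: (Pmax _ (ideal_addel a PI) (addel_sub a PI)) => [J1|].
- by case: nPa; apply: J1; apply: addel_el.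
- case=> m [r [Pm e]].
  have -> : b = m * b + r * (a * b) by rewrite mulrA -mulrDl -e mul1r.
  by apply: idealD => //; [apply: idealMr | apply: idealM].
Qed.


Fixpoint pprod (L : seq (R -> Prop)) (I : R -> Prop) : Prop :=
  match L with [::] => I 1 | P :: L' => forall x, P x -> pprod L' (fun y => I (x * y)) end.

Lemma pprod_mono L (I J : R -> Prop) : (forall y, I y -> J y) -> pprod L I -> pprod L J.
Proof.
elim: L I J => [|P L IH] I J /= IJ; first exact: IJ.
move=> H x Px; apply: (IH _ _ _ (H x Px)) => y; exact: IJ.
Qed.

Lemma pprod_cat L1 L2 (I1 I2 J : R -> Prop) : pprod L1 I1 -> pprod L2 I2 ->
  (forall a b, I1 a -> I2 b -> J (a * b)) -> pprod (L1 ++ L2) J.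
Proof.
elim: L1 I1 J => [|P L1 IH] I1 J /=.
- move=> I11 H2 H; apply: pprod_mono H2 => b Ib; rewrite -(mul1r b); exact: H.
- move=> H1 H2 H x Px; apply: (IH _ _ (H1 x Px) H2) => a b Ia Ib.
  rewrite mulrA; exact: H.
Qed.

Lemma pprod_split L1 (Q : R -> Prop) L2 (I : R -> Prop) :
  pprod (L1 ++ Q :: L2) I -> forall x, Q x -> pprod (L1 ++ L2) (fun y => I (x * y)).
Proof.
elim: L1 I => [|P L1 IH] I //=.
move=> H x Qx y Py; have := IH _ (H y Py) x Qx; apply: pprod_mono => z.
by rewrite mulrCA.
Qed.

Lemma pprod_all L (H : R -> Prop) (I : R -> R -> Prop) :
  (forall p, H p -> pprod L (I p)) -> pprod L (fun y => forall p, H p -> I p y).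
Proof.
elim: L I => [|P L IH] I /= h; first by move=> p; apply: h.
move=> x Px; apply: (IH (fun p y => I p (x * y))) => p Hp; exact: h p Hp x Px.
Qed.

Lemma pprod_wit L (I J : R -> Prop) : pprod L J -> ~ pprod L I ->
  exists y, J y /\ ~ I y.
Proof.
elim: L I J => [|P L IH] I J /=; first by move=> J1 nI1; exists 1.
move=> HJ nI; have [x [Px nx]] : exists x, P x /\ ~ pprod L (fun y => I (x * y)).
  apply: NNPP => h; apply: nI => x Px; apply: NNPP => h'; apply: h; by exists x.
have [y [Jy nIy]] := IH _ _ (HJ x Px) nx; by exists (x * y).
Qed.

Lemma pprod_avoid L (P I : R -> Prop) : prime_ideal P ->
  (forall Q, List.In Q L -> exists x, Q x /\ ~ P x) -> pprod L I -> sub_id I P -> False.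
Proof.
move=> [PI [nP1 Pp]]; elim: L I => [|Q L IH] I /= hL.
  by move=> I1 IP; apply: nP1; apply: IP.
move=> H IP; have [x [Qx nPx]] := hL Q (or_introl erefl).
apply: (IH (fun y => I (x * y)) (fun Q' h => hL Q' (or_intror h)) (H x Qx)).
by move=> y /IP /Pp [/nPx|].
Qed.

Definition nzprimes (L : seq (R -> Prop)) :=
  forall Q, List.In Q L -> prime_ideal Q /\ exists x, Q x /\ x != 0.

Lemma prod_primes (hN : noetherian_dom R) (I : R -> Prop) : is_ideal I ->
  (exists x, I x /\ x != 0) -> exists L, nzprimes L /\ pprod L I.
Proof.
move=> II Inz; apply: NNPP => hno.
have [M [[MI [Mnz nM]] Mmax]] := noeth_max hN
  (F := fun J => is_ideal J /\ (exists x, J x /\ x != 0) /\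
                 ~ exists L, nzprimes L /\ pprod L J) (fun J h => h.1)
  (ex_intro _ I (conj II (conj Inz hno))).
case: (classic (prime_ideal M)) => [Mp|nMp].
  apply: nM; exists [:: M]; split; first by move=> Q [<-|[]].
  by move=> x Mx /=; rewrite mulr1.
have nM1 : ~ M 1 by move=> M1; apply: nM; exists [::]; split => // Q [].
have [a [b [Mab [nMa nMb]]]] : exists a b, M (a * b) /\ ~ M a /\ ~ M b.
  apply: NNPP => h; apply: nMp; split => //; split => // a b Mab.
  case: (classic (M a)) => [|nMa]; [by left|].
  case: (classic (M b)) => [|nMb]; [by right|].
  by case: h; exists a, b.
have big : forall c, ~ M c -> exists L, nzprimes L /\ pprod L (addel M c).
  move=> c nMc; apply: NNPP => h.
  have : sub_id (addel M c) M.
    apply: Mmax; last exact: addel_sub.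
    split; first exact: ideal_addel. split; last exact: h.
    case: Mnz => x [Mx nx]; exists x; split => //; exact: addel_sub.
  by move=> H; exact: nMc (H c (addel_el c MI)).
have [L1 [P1 H1]] := big a nMa.
have [L2 [P2 H2]] := big b nMb.
apply: nM; exists (L1 ++ L2); split.
  by move=> Q /List.in_app_iff [] ?; [exact: P1 | exact: P2].
apply: (pprod_cat H1 H2) => x y [m [r [Mm ->]]] [m' [r' [Mm' ->]]].
have -> : (m + r * a) * (m' + r' * b) = m * (m' + r' * b) + (r * a) * m' + (r * r') * (a * b) by ring.
apply: idealD => //; last exact: (idealM _ MI Mab).
apply: idealD => //; [exact: (idealMr _ MI Mm) | exact: (idealM _ MI Mm')].
Qed.

Lemma ex_min_nat (Pn : nat -> Prop) : (exists n, Pn n) ->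
  exists n, Pn n /\ forall m, (m < n)%N -> ~ Pn m.
Proof.
move=> [n Pnn].
suff : forall N n, (n <= N)%N -> Pn n -> exists n, Pn n /\ forall m, (m < n)%N -> ~ Pn m.
  by move/(_ n n (leqnn n) Pnn).
elim=> [|N IH] k leK Pk.
  exists k; split => // m; rewrite (leqn0 k) in leK; by rewrite (eqP leK).
case: (classic (exists m, (m < k)%N /\ Pn m)) => [[m [ltm Pm]]|h].
  apply: (IH m) => //; rewrite -ltnS; exact: leq_trans ltm leK.
exists k; split => // m ltm Pm; apply: h; by exists m.
Qed.

Definition inv_el (P : R -> Prop) (q : K) := forall y, P y -> exists z, q * y%:F = z%:F.

Lemma det_trick (hR : dedekind R) (P : R -> Prop) (t : K) : is_ideal P ->
  (exists x, P x /\ x != 0) ->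
  (forall p, P p -> exists z, P z /\ t * p%:F = z%:F) -> exists r, t = r%:F.
Proof.
case: hR => hN hI _ PI [x0 [Px0 nx0]] Ht.
have [s Hs] := hN P PI.
have gen : forall i, (i < size s)%N -> P s`_i.
  move=> i lti; apply/(Hs _).2.
  by exists (fun j : 'I_(size s) => if (j : nat) == i then 1 else 0); apply: sum_delta.
have : forall i : 'I_(size s), exists c : 'I_(size s) -> R,
    t * (s`_i)%:F = (\sum_(j < size s) c j * s`_j)%:F.
  move=> i; have [z [Pz ->]] := Ht _ (gen i (ltn_ord i)).
  by have [c ->] := (Hs z).1 Pz; exists c.
move=> /fin_all_exists [f Hf].
pose A := \matrix_(i, j) f j i : 'M[R]_(size s).
pose v := \row_i (s`_i)%:F : 'rV[K]_(size s).
have ev : v *m map_mx (@tofrac R) A = t *: v.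
  apply/rowP => j; rewrite !mxE Hf rmorph_sum /=.
  apply: eq_bigr => i _; rewrite !mxE rmorphM /= mulrC.
  done.
have vnz : v != 0.
  apply/eqP => v0; move: nx0; have [c ->] := (Hs x0).1 Px0.
  rewrite big1 ?eqxx // => i _.
  have := congr1 (fun w : 'rV[K]_(size s) => w 0 i) v0; rewrite !mxE.
  by move/eqP; rewrite tofrac_eq0 => /eqP ->; rewrite mulr0.
have : eigenvalue (map_mx (@tofrac R) A) t by apply/eigenvalueP; exists v.
rewrite eigenvalue_root_char -map_char_poly => rt.
exact: hI _ _ (char_poly_monic A) rt.
Qed.


Lemma sum_in_ideal (P : R -> Prop) (l : seq (R * K)) : is_ideal P ->
  (forall pq, pq \in l -> exists z, pq.1%:F * pq.2 = z%:F /\ P z) ->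
  exists w, P w /\ \sum_(pq <- l) pq.1%:F * pq.2 = w%:F.
Proof.
move=> PI; elim: l => [|pq l IH] H.
  by exists 0; rewrite big_nil rmorph0; split => //; apply: ideal0.
have [z [ez Pz]] := H pq (mem_head _ _).
have [w [Pw ew]] : exists w, P w /\ \sum_(pq <- l) pq.1%:F * pq.2 = w%:F.
  by apply: IH => pq' h; apply: H; rewrite inE h orbT.
by exists (z + w); split; [apply: idealD | rewrite big_cons ez ew rmorphD].
Qed.

Lemma max_inv (hR : dedekind R) (P : R -> Prop) : maximal_ideal P ->
  (exists x, P x /\ x != 0) ->
  exists p q, P p /\ inv_el P q /\ exists z, q * p%:F = z%:F /\ ~ P z.
Proof.
move=> Pmax Pnz; have hR' := hR; case: hR' => hN hI hPM.
have Pp := max_prime Pmax; case: (Pmax) => PI [nP1 Pm].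
have [t [ntR tinv]] : exists t : K, (~ exists r, t = r%:F) /\ inv_el P t.
  case: Pnz => a [Pa na].
  pose aR := fun y => exists r, y = a * r.
  have aRI : is_ideal aR.
    split; first by exists 0; rewrite mulr0.
    split.
      by move=> x y [r ->] [r' ->]; exists (r + r'); rewrite mulrDr.
    by move=> r x [r' ->]; exists (r * r'); rewrite mulrCA.
  have aRP : sub_id aR P by move=> y [r ->]; exact: (idealMr _ PI Pa).
  have aRa : aR a by exists 1; rewrite mulr1.
  have [L0 hL0] := prod_primes hN aRI (ex_intro _ a (conj aRa na)).
  have [n0 [[L [[nzL pL] sL]] minL]] := ex_min_nat
    (ex_intro (fun n => exists L, (nzprimes L /\ pprod L aR) /\ size L = n) _
       (ex_intro _ L0 (conj hL0 erefl))).
  have [Q [inQ QP]] : exists Q, List.In Q L /\ sub_id Q P.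
    apply: NNPP => h; apply: (pprod_avoid Pp _ pL aRP) => Q inQ.
    apply: NNPP => h'; apply: h; exists Q; split => // y Qy.
    apply: NNPP => nPy; apply: h'; by exists y.
  have [L1 [L2 eL]] := List.in_split _ _ inQ.
  have catE : forall (l1 l2 : seq (R -> Prop)), (l1 ++ l2)%list = l1 ++ l2.
    by elim=> //= ? ? IH ?; rewrite IH.
  rewrite catE in eL.
  have PQ : sub_id P Q.
    have [Qp Qnz] := nzL Q inQ.
    have [_ [_ Qm]] := hPM Q Qp Qnz.
    by case: (Qm P PI QP) => // /nP1.
  have npL : ~ pprod (L1 ++ L2) aR.
    move=> h; apply: (minL (size (L1 ++ L2))).
      by rewrite -sL eL !size_cat /= addnS ltnS leqnn.
    exists (L1 ++ L2); split => //; split => // Q' /List.in_app_iff [h1|h2];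
      apply: nzL; rewrite eL; apply/List.in_app_iff; [by left | by right; right].
  have pJ : pprod (L1 ++ L2) (fun y => forall p, P p -> aR (p * y)).
    apply: pprod_all => p Pp'; apply: (pprod_split (Q := Q)); [by rewrite -eL | exact: PQ].
  have [b [Jb nb]] := pprod_wit pJ npL.
  have naF : a%:F != 0 by rewrite tofrac_eq0.
  exists (b%:F / a%:F); split.
  - move=> [r er]; apply: nb; exists r.
    apply/eqP; rewrite -tofrac_eq rmorphM /= -er mulrC divfK //.
  - move=> y Py; have [r e] := Jb y Py; exists r.
    rewrite mulrAC -rmorphM /= [b * y]mulrC e rmorphM /= mulrAC divff // mul1r //.
pose S := fun x : R => exists l : seq (R * K),
  (forall pq, pq \in l -> P pq.1 /\ inv_el P pq.2) /\
  x%:F = \sum_(pq <- l) pq.1%:F * pq.2.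
have SI : is_ideal S.
  split; first by exists [::]; rewrite big_nil rmorph0.
  split.
  - move=> x y [l [fl ex]] [l' [fl' ey]]; exists (l ++ l'); split.
      by move=> pq; rewrite mem_cat => /orP []; [apply: fl | apply: fl'].
    by rewrite big_cat tofracD ex ey.
  - move=> r x [l [fl ex]]; exists [seq (r * pq.1, pq.2) | pq <- l]; split.
      move=> pq /mapP [pq' h ->] /=; have [h1 h2] := fl _ h; split => //.
      exact: (idealM _ PI h1).
    rewrite big_map tofracM ex mulr_sumr; apply: eq_bigr => pq _ /=.
    by rewrite tofracM mulrA.
have PS : sub_id P S.
  move=> x Px; exists [:: (x, 1)]; split; last by rewrite big_seq1 mulr1.
  move=> pq; rewrite inE => /eqP -> /=; split => // y _; exists y; by rewrite mul1r.
case: (Pm S SI PS) => [SP|S1].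
  exfalso; apply: ntR; apply: (det_trick hR PI Pnz) => p Pp'.
  have [z ez] := tinv p Pp'; exists z; split => //; apply: SP; exists [:: (p, t)]; split.
    by move=> pq; rewrite inE => /eqP -> /=.
  by rewrite big_seq1 mulrC.
case: S1 => l [fl e1].
have [pq [inl [z [ez nPz]]]] : exists pq, pq \in l /\
    exists z, pq.2 * pq.1%:F = z%:F /\ ~ P z.
  apply: NNPP => h.
  have [w [Pw ew]] : exists w, P w /\ \sum_(pq <- l) pq.1%:F * pq.2 = w%:F.
    apply: sum_in_ideal => // pq inl.
    have [h1 h2] := fl pq inl; have [z ez] := h2 _ h1.
    exists z; split; first by rewrite mulrC.
    apply: NNPP => nPz; apply: h; exists pq; split => //; by exists z.
  apply: nP1; suff -> : 1 = w by [].
  by apply/eqP; rewrite -tofrac_eq -ew -e1 rmorph1.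
have [h1 h2] := fl pq inl.
by exists pq.1, pq.2; split => //; split => //; exists z.
Qed.

End Ded.

Lemma fld1 (F : fieldType) (s q p x : F) : p != 0 -> s * (q * p) * (x / p) = q * (s * x).
Proof. by move=> h; field. Qed.
Lemma fld2 (F : fieldType) (s x P : F) : x != 0 -> P != 0 -> s * (x / P) * P / x = s.
Proof. by move=> h1 h2; field; rewrite h1 h2. Qed.
Lemma fld3 (F : fieldType) (s x p pk : F) : s != 0 -> x != 0 -> p != 0 -> pk != 0 ->
  s^-1 * (s * (x / (p * pk)) * pk / x) = p^-1.
Proof. by move=> h1 h2 h3 h4; field; rewrite h1 h2 h3 h4. Qed.

Lemma fld4 (F : fieldType) (P u u' : F) i j : (j <= i)%N -> P != 0 -> u' != 0 ->
  P ^+ i * u / (P ^+ j * u') = P ^+ (i - j) * (u / u').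
Proof.
move=> h hP hu; have -> : P ^+ i = P ^+ (i - j) * P ^+ j by rewrite -exprD subnK.
field.
by rewrite hu expf_neq0.
Qed.
Lemma fld5 (F : fieldType) (P u u' : F) i j : (i < j)%N -> P != 0 -> u' != 0 ->
  P ^+ i * u / (P ^+ j * u') * P ^+ (j - i) = u / u'.
Proof.
move=> h hP hu; have -> : P ^+ j = P ^+ (j - i) * P ^+ i by rewrite -exprD subnK // ltnW.
field.
by rewrite hu !expf_neq0.
Qed.
Lemma fld6 (F : fieldType) (x P u : F) k : x != 0 -> P != 0 -> x * P ^+ k.+1 = u ->
  x^-1 / P = P ^+ k / u.
Proof. by move=> hx hP <-; rewrite exprS; field; rewrite hx hP expf_neq0. Qed.
Lemma fld7 (F : fieldType) (x q p u : F) k : q != 0 -> p != 0 -> x * p ^+ k = u ->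
  x / q ^+ k = u / (q * p) ^+ k.
Proof. by move=> hq hp <-; rewrite exprMn; field; rewrite !expf_neq0. Qed.

Section Loc.
Variable R : idomainType.
Local Notation K := {fraction R}.
Local Notation "x %:F" := (@tofrac R x).

Definition kmod (M : K -> Prop) := M 0 /\ (forall x y, M x -> M y -> M (x + y)) /\
  (forall r x, M x -> M (r%:F * x)).
Definition isR (x : K) := exists r, x = r%:F.
Definition Mloc (P : R -> Prop) (M : K -> Prop) (x : K) := exists s, ~ P s /\ M (s%:F * x).
Definition Rloc P := Mloc P isR.

Lemma kmod0 M : kmod M -> M 0. Proof. by case. Qed.
Lemma kmodD M x y : kmod M -> M x -> M y -> M (x + y).
Proof. by case=> _ [H _]; apply: H. Qed.
Lemma kmodR M r x : kmod M -> M x -> M (r%:F * x).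
Proof. by case=> _ [_ H]; apply: H. Qed.
Lemma kmodN M x : kmod M -> M x -> M (- x).
Proof. by move=> MM Mx; rewrite -mulN1r -tofrac1 -tofracN; apply: kmodR. Qed.
Lemma kmodB M x y : kmod M -> M x -> M y -> M (x - y).
Proof. by move=> MM Mx My; apply: kmodD => //; apply: kmodN. Qed.
Lemma kmod_big M (I : Type) (l : seq I) (F : I -> K) : kmod M ->
  (forall i, List.In i l -> M (F i)) -> M (\sum_(i <- l) F i).
Proof.
move=> MM; elim: l => [|i l IH] H; first by rewrite big_nil; apply: kmod0.
rewrite big_cons; apply: kmodD => //; first by apply: H; left.
by apply: IH => j h; apply: H; right.
Qed.

Lemma kmod_isR : kmod isR.
Proof.
split; first by exists 0; rewrite tofrac0.
split; first by move=> x y [a ->] [b ->]; exists (a + b); rewrite tofracD.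
by move=> r x [a ->]; exists (r * a); rewrite tofracM.
Qed.

Lemma isR_mul x y : isR x -> isR y -> isR (x * y).
Proof. by move=> [a ->] [b ->]; exists (a * b); rewrite tofracM. Qed.

Lemma Mloc_sub (P : R -> Prop) M x : ~ P 1 -> M x -> Mloc P M x.
Proof. by move=> nP1 Mx; exists 1; rewrite tofrac1 mul1r. Qed.

Lemma prime_mul (P : R -> Prop) a b : prime_ideal P -> ~ P a -> ~ P b -> ~ P (a * b).
Proof. by move=> [_ [_ H]] na nb Pab; case: (H a b Pab). Qed.

Lemma prime_exp (P : R -> Prop) a k : prime_ideal P -> ~ P a -> ~ P (a ^+ k).
Proof.
move=> Pp na; elim: k => [|k IH]; first by rewrite expr0; case: Pp => _ [].
by rewrite exprS; apply: prime_mul.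
Qed.

Lemma Mloc_kmod (P : R -> Prop) M : prime_ideal P -> kmod M -> kmod (Mloc P M).
Proof.
move=> Pp MM; have nP1 : ~ P 1 by case: Pp => _ [].
split; first by apply: Mloc_sub => //; apply: kmod0.
split.
- move=> x y [s [ns Ms]] [s' [ns' Ms']]; exists (s * s'); split; first exact: prime_mul.
  rewrite mulrDr; apply: kmodD => //.
    by rewrite tofracM mulrAC mulrC; apply: (kmodR _ MM Ms).
  by rewrite tofracM -mulrA; apply: (kmodR _ MM Ms').
- move=> r x [s [ns Ms]]; exists s; split => //.
  by rewrite mulrCA; apply: (kmodR _ MM Ms).
Qed.

Lemma Mloc_mul (P : R -> Prop) M a x : prime_ideal P -> kmod M ->
  Rloc P a -> Mloc P M x -> Mloc P M (a * x).
Proof.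
move=> Pp MM [s [ns [r er]]] [s' [ns' Ms']]; exists (s * s'); split.
  exact: prime_mul.
by rewrite tofracM mulrACA er; apply: (kmodR _ MM Ms').
Qed.

Lemma Rloc_mul (P : R -> Prop) a b : prime_ideal P -> Rloc P a -> Rloc P b -> Rloc P (a * b).
Proof. by move=> Pp ha hb; apply: Mloc_mul => //; exact: kmod_isR. Qed.

Lemma Rloc_R (P : R -> Prop) r : prime_ideal P -> Rloc P r%:F.
Proof. by move=> Pp; apply: Mloc_sub; [case: Pp => _ [] | exists r]. Qed.


Lemma ideal_nP0 (P : R -> Prop) s : is_ideal P -> ~ P s -> s != 0.
Proof. by move=> PI ns; apply/eqP => s0; apply: ns; rewrite s0; apply: ideal0. Qed.

Lemma Rloc_invs (P : R -> Prop) s : is_ideal P -> ~ P s -> Rloc P (s%:F)^-1.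
Proof.
move=> PI ns; exists s; split => //; exists 1; rewrite tofrac1 divff //.
by rewrite tofrac_eq0; apply: ideal_nP0 ns.
Qed.

Lemma Mloc_ext (P Q : R -> Prop) M x : (forall s, P s <-> Q s) -> Mloc P M x -> Mloc Q M x.
Proof. by move=> PQ [s [ns h]]; exists s; split => // /PQ. Qed.

Lemma local_global (hN : noetherian_dom R) M x : kmod M ->
  (forall P, maximal_ideal P -> Mloc P M x) -> M x.
Proof.
move=> MM H.
pose I := fun r => M (r%:F * x).
have II : is_ideal I.
  split; first by rewrite /I tofrac0 mul0r; apply: kmod0.
  split; first by move=> a b Ia Ib; rewrite /I tofracD mulrDl; apply: kmodD.
  by move=> r a Ia; rewrite /I tofracM -mulrA; apply: kmodR.
case: (classic (I 1)) => [|nI1]; first by rewrite /I tofrac1 mul1r.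
have [P [Pm IP]] := ideal_in_max hN II nI1.
by have [s [ns Is]] := H P Pm; case: ns; apply: IP.
Qed.

Lemma max_eq (P Q : R -> Prop) : maximal_ideal P -> maximal_ideal Q ->
  sub_id P Q -> forall s, P s <-> Q s.
Proof.
move=> [PI [nP1 Pm]] [QI [nQ1 Qm]] PQ s; split; first exact: PQ.
by case: (Pm Q QI PQ) => [QP|/nQ1 []]; [exact: QP].
Qed.

End Loc.

Section Unif.
Variable R : idomainType.
Local Notation K := {fraction R}.
Local Notation "x %:F" := (@tofrac R x).
Variables (P : R -> Prop) (p : R) (q : K) (z0 : R).
Hypotheses (Pm : maximal_ideal P) (hN : noetherian_dom R) (Pp : P p)
  (qinv : inv_el P q) (ez0 : q * p%:F = z0%:F) (nz0 : ~ P z0).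

Let Ppr : prime_ideal P := max_prime Pm.
Let PI : is_ideal P. Proof. by case: Pm. Qed.
Let nP1 : ~ P 1. Proof. by case: Pm => _ []. Qed.
Let RlocK : kmod (Rloc P) := Mloc_kmod Ppr (@kmod_isR R).

Lemma pF_nz : p%:F != 0.
Proof.
apply/eqP => p0; apply: nz0; move: ez0; rewrite p0 mulr0 => /esym/eqP.
by rewrite tofrac_eq0 => /eqP ->; apply: ideal0.
Qed.

Lemma q_nz : q != 0.
Proof.
apply/eqP => q0; apply: nz0; move: ez0; rewrite q0 mul0r => /esym/eqP.
by rewrite tofrac_eq0 => /eqP ->; apply: ideal0.
Qed.

Definition Uloc x := x != 0 /\ Rloc P x /\ Rloc P x^-1.


Lemma T2 x : Rloc P x -> ~ Rloc P x^-1 -> Rloc P (x / p%:F).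
Proof.
move=> [s [ns [r er]]] nx.
case: (classic (P r)) => [Pr|nPr].
  have [z ez] := qinv Pr.
  exists (s * z0); split; first exact: prime_mul.
  exists z; rewrite tofracM -ez0 -ez -er; apply: fld1; exact: pF_nz.
have xnz : x != 0.
  apply/eqP => x0; apply: nPr; move: er; rewrite x0 mulr0 => /esym/eqP.
  by rewrite tofrac_eq0 => /eqP ->; apply: ideal0.
case: nx; exists r; split => //; exists s; by rewrite -er mulfK.
Qed.

Lemma pk_nz k : p%:F ^+ k != 0.
Proof. by rewrite expf_neq0 // pF_nz. Qed.

Lemma krull x : x != 0 -> Rloc P x -> exists N, ~ Rloc P (x / p%:F ^+ N).
Proof.
move=> nx hx; apply: NNPP => H.
have H' : forall N, Rloc P (x / p%:F ^+ N).
  by move=> N; apply: NNPP => h; apply: H; exists N.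
pose I k := fun r : R => Rloc P (r%:F * p%:F ^+ k / x).
have II : forall k, is_ideal (I k).
  move=> k; split; first by rewrite /I tofrac0 !mul0r; apply: kmod0.
  split; first by move=> a b Ia Ib; rewrite /I tofracD !mulrDl; apply: kmodD.
  move=> r a Ia; rewrite /I tofracM -!mulrA; apply: (kmodR r RlocK); by rewrite !mulrA.
have mono : forall k r, I k r -> I k.+1 r.
  move=> k r h; have := kmodR p RlocK h; rewrite /I exprS.
  suff -> : p%:F * (r%:F * p%:F ^+ k / x) = r%:F * (p%:F * p%:F ^+ k) / x by [].
  by ring.
have [k0 Hk0] := noeth_acc hN II mono.
have [s [ns [r er]]] := H' k0.+1.
have Ir : I k0.+1 r.
  exists 1; split => //; exists s; rewrite -er tofrac1 mul1r.
  by rewrite fld2 // pk_nz.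
have := Hk0 _ _ Ir; rewrite /I -er => h.
have : Rloc P (p%:F)^-1.
  have := Rloc_mul Ppr (Rloc_invs PI ns) h.
  rewrite exprS fld3 //; first by rewrite tofrac_eq0 (ideal_nP0 PI ns).
  - exact: pF_nz.
  - exact: pk_nz.
move=> [s1 [ns1 [r1 e1]]]; apply: ns1.
have -> : s1 = r1 * p by apply/eqP; rewrite -tofrac_eq tofracM -e1 mulfVK // pF_nz.
exact: (idealM r1 PI Pp).
Qed.


Lemma Rloc_exp x k : Rloc P x -> Rloc P (x ^+ k).
Proof.
move=> hx; elim: k => [|k IH]; first by rewrite expr0 -tofrac1; apply: Rloc_R.
by rewrite exprS; apply: Rloc_mul.
Qed.

Lemma Uloc_mul x y : Uloc x -> Uloc y -> Uloc (x * y).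
Proof.
move=> [hx [h1 h2]] [hy [h3 h4]]; split; first by rewrite mulf_neq0.
by split; [apply: Rloc_mul | rewrite invfM; apply: Rloc_mul].
Qed.

Lemma Uloc_inv x : Uloc x -> Uloc x^-1.
Proof. by move=> [hx [h1 h2]]; split; [rewrite invr_eq0 | rewrite invrK]. Qed.

Lemma Uloc_R s : ~ P s -> Uloc s%:F.
Proof.
move=> ns; split; first by rewrite tofrac_eq0 (ideal_nP0 PI ns).
by split; [apply: Rloc_R | apply: Rloc_invs].
Qed.

Lemma decomp_loc x : x != 0 -> Rloc P x -> exists k u, Uloc u /\ x = p%:F ^+ k * u.
Proof.
move=> nx hx; have [N hN'] := krull nx hx.
elim: N x nx hx hN' => [|N IH] x nx hx hN'.
  by move: hN'; rewrite expr0 divr1.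
case: (classic (Rloc P x^-1)) => [hi|nhi].
  by exists 0%N, x; split; [split | rewrite expr0 mul1r].
have h2 := T2 hx nhi.
have nx2 : x / p%:F != 0 by rewrite mulf_neq0 // invr_eq0 pF_nz.
have hN2 : ~ Rloc P (x / p%:F / p%:F ^+ N) by rewrite -mulrA -invfM -exprS.
have [k [u [hu e]]] := IH _ nx2 h2 hN2.
exists k.+1, u; split => //; rewrite exprS -mulrA -e.
by rewrite mulrC divfK // pF_nz.
Qed.

Lemma decompK x : x != 0 ->
  exists k u, Uloc u /\ (x = p%:F ^+ k * u \/ x * p%:F ^+ k = u).
Proof.
have [a [b [nb ->]]] := fracE x => nx.
have na : a%:F != 0 by apply: contraNneq nx => ->; rewrite mul0r.
have nbF : b%:F != 0 by rewrite tofrac_eq0.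
have [i [u [hu ea]]] := decomp_loc na (Rloc_R a Ppr).
have [j [u' [hu' eb]]] := decomp_loc nbF (Rloc_R b Ppr).
have hq : Uloc (u / u') by apply: Uloc_mul => //; apply: Uloc_inv.
have nu' : u' != 0 by case: hu'.
rewrite ea eb; case: (leqP j i) => h.
  by exists (i - j)%N, (u / u'); split => //; left; apply: fld4 => //; apply: pF_nz.
by exists (j - i)%N, (u / u'); split => //; right; apply: fld5 => //; apply: pF_nz.
Qed.

Lemma Rloc_p k : Rloc P (p%:F ^+ k).
Proof. by rewrite -tofracXn; apply: Rloc_R. Qed.

Lemma T3 x : x != 0 -> ~ Rloc P x -> Rloc P (x^-1 / p%:F).
Proof.
move=> nx nhx; have [k [u [[un [hu hui]] [e|e]]]] := decompK nx.
  by case: nhx; rewrite e; apply: Rloc_mul => //; apply: Rloc_p.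
case: k e => [|k] e; first by case: nhx; move: e; rewrite expr0 mulr1 => ->.
rewrite (fld6 nx pF_nz e); apply: Rloc_mul => //; apply: Rloc_p.
Qed.

Lemma T4 x : x != 0 -> exists w,
  ((exists k, w = p%:F ^+ k) \/ (exists k, w = q ^+ k)) /\ Uloc (x * w).
Proof.
move=> nx; have [k [u [hu [e|e]]]] := decompK nx.
  exists (q ^+ k); split; first by right; exists k.
  have -> : x * q ^+ k = u * (z0%:F) ^+ k by rewrite e -ez0 exprMn; ring.
  by apply: Uloc_mul => //; rewrite -tofracXn; apply: Uloc_R; apply: prime_exp.
by exists (p%:F ^+ k); split; [left; exists k | rewrite e].
Qed.

Lemma T4a x : x != 0 -> exists k, Rloc P (x / q ^+ k).
Proof.
move=> nx; have [k [u [[un [hu hui]] [e|e]]]] := decompK nx.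
  exists 0%N; rewrite expr0 divr1 e; apply: Rloc_mul => //; apply: Rloc_p.
exists k; rewrite (fld7 q_nz pF_nz e) ez0 -tofracXn; apply: Rloc_mul => //.
by apply: Rloc_invs => //; apply: prime_exp.
Qed.

Lemma T5 Q : maximal_ideal Q -> (exists y, P y /\ ~ Q y) -> Rloc Q q.
Proof.
move=> Qm [y [Py nQy]]; have [z ez] := qinv Py.
by exists y; split => //; exists z; rewrite mulrC.
Qed.

End Unif.

Lemma fld8 (F : fieldType) (e u d0 a b : F) : u != 0 -> d0 != 0 -> b != 0 ->
  e / (u * d0) = a / b -> b * e = u * (a * d0).
Proof.
move=> h1 h3 h2 H; have -> : e = a / b * (u * d0) by rewrite -H divfK // mulf_neq0.
by field.
Qed.
Lemma fld9 (F : fieldType) (s e u d0 qk r : F) : u != 0 -> d0 != 0 -> qk != 0 ->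
  s * (e / (u * d0) / qk) = r -> s * e = u * qk * (r * d0).
Proof. by move=> h1 h2 h3 <-; field; rewrite h1 h2 h3. Qed.
Lemma fld11 (F : fieldType) (s e y r : F) : y != 0 -> s * (e / y) = r -> s * e = r * y.
Proof. by move=> h <-; field. Qed.
Lemma fld10 (F : fieldType) (s e y p r q z : F) : e != 0 -> y != 0 -> p != 0 ->
  s * ((e / y)^-1 / p) = r -> q * p = z -> s * (q * y) = (r * z) * e.
Proof. by move=> he hy hp <- <-; field; rewrite he hy hp. Qed.
Lemma fld12 (F : fieldType) (s t r : F) : t != 0 -> s * t^-1 = r -> s = r * t.
Proof. by move=> h <-; field. Qed.

Section Glob.
Variable R : idomainType.
Local Notation K := {fraction R}.
Local Notation "x %:F" := (@tofrac R x).

Lemma In_map (A B : Type) (f : A -> B) (l : seq A) y :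
  List.In y (map f l) -> exists x, List.In x l /\ y = f x.
Proof.
elim: l => [|a l IH] //= [<-|h]; first by exists a; split => //; left.
by have [x [h1 h2]] := IH h; exists x; split => //; right.
Qed.

Lemma Rloc_expg (P : R -> Prop) x k : prime_ideal P -> Rloc P x -> Rloc P (x ^+ k).
Proof.
move=> Pp hx; elim: k => [|k IH]; first by rewrite expr0 -tofrac1; apply: Rloc_R.
by rewrite exprS; apply: Rloc_mul.
Qed.

Definition colon (E D : K -> Prop) (t : K) := forall d, D d -> E (t * d).
Definition sprod (T D : K -> Prop) (e : K) := exists l : seq (K * K),
  (forall pr, List.In pr l -> T pr.1 /\ D pr.2) /\ e = \sum_(pr <- l) pr.1 * pr.2.
Definition ssum (T : K -> Prop) (e : K) := exists l : seq K,
  (forall t, List.In t l -> T t) /\ e = \sum_(t <- l) t.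

Definition Rclosed (T : K -> Prop) := forall r t, T t -> T (r%:F * t).

Lemma colon_kmod E D : kmod E -> kmod (colon E D).
Proof.
move=> EK; split; first by move=> d _; rewrite mul0r; apply: kmod0.
split; first by move=> x y hx hy d Dd; rewrite mulrDl; exact: (kmodD EK (hx d Dd) (hy d Dd)).
by move=> r x hx d Dd; rewrite -mulrA; exact: (kmodR r EK (hx d Dd)).
Qed.

Lemma sprod_kmod T D : Rclosed T -> kmod (sprod T D).
Proof.
move=> TR; split; first by exists [::]; rewrite big_nil.
split.
  move=> x y [l [hl ->]] [l' [hl' ->]]; exists (l ++ l'); split; last by rewrite big_cat.
  by move=> pr /List.in_app_iff [] ?; [apply: hl | apply: hl'].
move=> r x [l [hl ->]]; exists (map (fun pr => (r%:F * pr.1, pr.2)) l); split.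
  move=> pr hpr; have [pr' [h ->]] := In_map hpr; have [h1 h2] := hl _ h; split => //; exact: TR.
by rewrite big_map mulr_sumr; apply: eq_bigr => pr _; rewrite mulrA.
Qed.

Lemma ssum_kmod T : Rclosed T -> kmod (ssum T).
Proof.
move=> TR; split; first by exists [::]; rewrite big_nil.
split.
  move=> x y [l [hl ->]] [l' [hl' ->]]; exists (l ++ l'); split; last by rewrite big_cat.
  by move=> pr /List.in_app_iff [] ?; [apply: hl | apply: hl'].
move=> r x [l [hl ->]]; exists (map (fun t => r%:F * t) l); split.
  by move=> t ht; have [t' [h ->]] := In_map ht; apply: TR; apply: hl.
by rewrite big_map mulr_sumr.
Qed.

Lemma not_sub (P Q : R -> Prop) : ~ sub_id P Q -> exists y, P y /\ ~ Q y.
Proof.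
move=> h; apply: NNPP => h'; apply: h => y Py; apply: NNPP => nQy; apply: h'.
by exists y.
Qed.

Lemma zero_ideal_notin (P : R -> Prop) s : ~ (exists x, P x /\ x != 0) -> s != 0 -> ~ P s.
Proof. by move=> h ns Ps; apply: h; exists s. Qed.


Lemma colon_Rclosed E D : kmod E -> Rclosed (colon E D).
Proof. by move=> EK r t ht d Dd; rewrite -mulrA; exact: (kmodR r EK (ht d Dd)). Qed.

Lemma unif_nz (P : R -> Prop) p q z0 : is_ideal P -> q * p%:F = z0%:F -> ~ P z0 ->
  q != 0 /\ p%:F != 0.
Proof.
move=> PI ez0 nz0; split; apply/eqP => h; apply: nz0; move: ez0;
  rewrite h ?mul0r ?mulr0 => /esym/eqP; rewrite tofrac_eq0 => /eqP ->; exact: ideal0.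
Qed.

Lemma F1 (hR : dedekind R) (D E : K -> Prop) (u : K) : kmod D -> kmod E ->
  (exists d, D d /\ d != 0) -> u != 0 -> (forall d, D d -> E (u * d)) ->
  forall e, E e -> sprod (colon E D) D e.
Proof.
move=> DK EK [d0 [Dd0 nd0]] nu uDE e Ee.
have hR' := hR; case: hR' => hN _ _.
have NK : kmod (sprod (colon E D) D) by apply: sprod_kmod; apply: colon_Rclosed.
have Nt : forall t d, colon E D t -> D d -> sprod (colon E D) D (t * d).
  by move=> t d ht Dd; exists [:: (t, d)]; split; [move=> pr [<-|[]] | rewrite big_seq1].
case: (eqVneq e 0) => [->|ne]; first exact: kmod0.
apply: (local_global hN NK) => P Pm.
have Ppr := max_prime Pm; have nP1 : ~ P 1 by case: Pm => _ [].
have PI : is_ideal P by case: Pm.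
case: (classic (exists x, P x /\ x != 0)) => [Pnz|Pz]; last first.
  have [a [b [nb eab]]] := fracE (e / (u * d0)).
  exists b; split; first exact: zero_ideal_notin.
  rewrite (fld8 nu nd0 _ eab) ?tofrac_eq0 //.
  by apply: Nt => //; exact: kmodR.
have [p [q [Pp [qinv [z0 [ez0 nz0]]]]]] := max_inv hR Pm Pnz.
have [qnz pnz] := unif_nz PI ez0 nz0.
have aux : forall k, (forall d, D d -> Mloc P E (u * q ^+ k * d)) -> colon E D (u * q ^+ k).
  move=> k hk d Dd; apply: (local_global hN EK) => Q Qm.
  case: (classic (sub_id P Q)) => [PQ|nPQ].
    exact: (Mloc_ext (max_eq Pm Qm PQ) (hk d Dd)).
  have [y [Py nQy]] := not_sub nPQ; have [z ez] := qinv y Py.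
  have hq : Rloc Q q by exists y; split => //; exists z; rewrite mulrC.
  have nQ1 : ~ Q 1 by case: Qm => _ [].
  have := Mloc_mul (max_prime Qm) EK (Rloc_expg k (max_prime Qm) hq)
    (Mloc_sub (P := Q) nQ1 (uDE d Dd)).
  by rewrite mulrCA mulrA.
case: (classic (forall k d, D d -> Mloc P E (u * q ^+ k * d))) => [unb|bnd].
  have nz : e / (u * d0) != 0 by rewrite mulf_neq0 // invr_eq0 mulf_neq0.
  have [k [s [ns [r er]]]] := T4a Pm hN Pp qinv ez0 nz0 nz.
  exists s; split => //.
  rewrite (fld9 nu nd0 (expf_neq0 k qnz) er).
  by apply: Nt; [apply: aux => d Dd; apply: unb | exact: kmodR].
have [k1 [[d1 [Dd1 nd1]] mink]] := ex_min_nat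
  (Pn := fun k => exists d, D d /\ ~ Mloc P E (u * q ^+ k * d))
  (NNPP _ (fun h => bnd (fun k d Dd => NNPP _ (fun h' => h (ex_intro _ k (ex_intro _ d (conj Dd h'))))))).
case: k1 nd1 mink => [|k] nd1 mink.
  by case: nd1; rewrite expr0 mulr1; apply: Mloc_sub => //; apply: uDE.
have hk : forall d, D d -> Mloc P E (u * q ^+ k * d).
  by move=> d Dd; apply: NNPP => h; apply: (mink k (ltnSn k)); exists d.
have tcol := aux k hk.
pose y := u * q ^+ k * d1.
have eqy : u * q ^+ k.+1 * d1 = q * y by rewrite /y exprS; ring.
have ny : y != 0.
  apply/eqP => y0; apply: nd1; rewrite eqy y0 mulr0.
  by apply: Mloc_sub => //; apply: kmod0.
case: (classic (Rloc P (e / y))) => [[s [ns [r er]]]|nr].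
  exists s; split => //; rewrite (fld11 ny er).
  have -> : r%:F * y = u * q ^+ k * (r%:F * d1) by rewrite /y; ring.
  by apply: Nt => //; exact: kmodR.
have nz : e / y != 0 by rewrite mulf_neq0 // invr_eq0.
have [s [ns [r er]]] := T3 Pm hN Pp qinv ez0 nz0 nz nr.
exfalso; apply: nd1; exists s; split => //.
rewrite eqy (fld10 ne ny pnz er ez0) -tofracM.
exact: kmodR.
Qed.


Lemma lemS (hR : dedekind R) (J : K -> Prop) (I : Type) (Jf : I -> K -> Prop) (uf : I -> K) :
  kmod J -> (exists j, J j /\ j != 0) -> (forall i, kmod (Jf i)) ->
  (forall i x, Jf i x -> J x) ->
  (forall x, J x -> exists l : seq (I * K),
     (forall pr, List.In pr l -> Jf pr.1 pr.2) /\ x = \sum_(pr <- l) pr.2) ->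
  (forall i, uf i != 0 /\ forall x, J x -> Jf i (uf i * x)) ->
  ssum (fun t => exists i, colon (Jf i) J t) 1.
Proof.
move=> JK [j0 [Jj0 nj0]] JfK Jsub Jdec hu.
have hR' := hR; case: hR' => hN _ _.
pose T := fun t => exists i, colon (Jf i) J t.
have TR : Rclosed T by move=> r t [i ht]; exists i; apply: colon_Rclosed.
have SK : kmod (ssum T) by apply: ssum_kmod.
have [i0 _] : exists i0 : I, True.
  have [l [hl e]] := Jdec j0 Jj0; case: l hl e => [|pr l] hl e.
    by move: nj0; rewrite e big_nil eqxx.
  by exists pr.1.
have Tu : forall i, T (uf i) by move=> i; exists i => x Jx; exact: (hu i).2.
have fin : forall P t, T t -> Rloc P (t^-1) -> t != 0 -> Mloc P (ssum T) 1.
  move=> P t Tt [s [ns [r er]]] nt; exists s; split => //.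
  rewrite mulr1 (fld12 nt er); exists [:: r%:F * t]; split; last by rewrite big_seq1.
  by move=> t' [<-|[]]; exact: TR.
apply: (local_global hN SK) => P Pm.
have Ppr := max_prime Pm; have nP1 : ~ P 1 by case: Pm => _ [].
have PI : is_ideal P by case: Pm.
case: (classic (exists x, P x /\ x != 0)) => [Pnz|Pz]; last first.
  have [a [b [nb eab]]] := fracE (uf i0).
  have na : a != 0.
    apply/eqP => a0; move: (hu i0).1; rewrite eab a0 tofrac0 mul0r eqxx //.
  exists a; split; first exact: zero_ideal_notin.
  rewrite mulr1; exists [:: b%:F * uf i0]; split.
    by move=> t' [<-|[]]; exact: TR (Tu i0).
  by rewrite big_seq1 eab mulrC divfK // tofrac_eq0.
have [p [q [Pp [qinv [z0 [ez0 nz0]]]]]] := max_inv hR Pm Pnz.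
have [qnz pnz] := unif_nz PI ez0 nz0.
have colw : forall i w, ((exists k, w = p%:F ^+ k) \/ (exists k, w = q ^+ k)) ->
    (forall x, J x -> Mloc P (Jf i) (uf i * w * x)) -> colon (Jf i) J (uf i * w).
  move=> i w hw hloc x Jx; apply: (local_global hN (JfK i)) => Q Qm.
  case: (classic (sub_id P Q)) => [PQ|nPQ].
    exact: (Mloc_ext (max_eq Pm Qm PQ) (hloc x Jx)).
  have [y [Py nQy]] := not_sub nPQ.
  have Qpr := max_prime Qm; have nQ1 : ~ Q 1 by case: Qm => _ [].
  have hw' : Rloc Q w.
    case: hw => [[k ->]|[k ->]]; first by rewrite -tofracXn; apply: Rloc_R.
    apply: Rloc_expg => //; have [z ez] := qinv y Py.
    by exists y; split => //; exists z; rewrite mulrC.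
  have := Mloc_mul Qpr (JfK i) hw' (Mloc_sub (P := Q) nQ1 ((hu i).2 x Jx)).
  by rewrite mulrCA mulrA.
have MJK : kmod (Mloc P J) := Mloc_kmod Ppr JK.
case: (classic (forall j, J j -> Mloc P J (q * j))) => [hc1|hc2].
  have [w [hw [nt [hR1 hR2]]]] := T4 Pm hN Pp qinv ez0 nz0 (hu i0).1.
  apply: (fin P (uf i0 * w)) => //; exists i0; apply: colw => // x Jx.
  case: hw => [[k ->]|[k ->]].
    have -> : uf i0 * p%:F ^+ k * x = (p ^+ k)%:F * (uf i0 * x) by rewrite tofracXn; ring.
    by apply: Mloc_sub => //; exact: (kmodR _ (JfK i0) ((hu i0).2 x Jx)).
  have hqk : Mloc P J (q ^+ k * x).
    elim: k => [|k [s [ns Js]]]; first by rewrite expr0 mul1r; apply: Mloc_sub.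
    have [s' [ns' Js']] := hc1 _ Js.
    exists (s' * s); split; first exact: prime_mul.
    by have -> : (s' * s)%:F * (q ^+ k.+1 * x) = s'%:F * (q * (s%:F * (q ^+ k * x)))
      by rewrite tofracM exprS; ring.
  have [s [ns Js]] := hqk; exists s; split => //.
  have := (hu i0).2 _ Js.
  by have -> : uf i0 * (s%:F * (q ^+ k * x)) = s%:F * (uf i0 * q ^+ k * x) by ring.
have [j [Jj nj]] : exists j, J j /\ ~ Mloc P J (q * j).
  apply: NNPP => h; apply: hc2 => j Jj; apply: NNPP => h'; apply: h; by exists j.
have [l [hl ej]] := Jdec j Jj.
have [pr [inpr nq]] : exists pr, List.In pr l /\ ~ Mloc P J (q * pr.2).
  apply: NNPP => h; apply: nj; rewrite ej mulr_sumr; apply: kmod_big => // pr inpr.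
  apply: NNPP => h'; apply: h; by exists pr.
have Jfy := hl _ inpr; have Jy := Jsub _ _ Jfy.
have ny : pr.2 != 0.
  apply/eqP => y0; apply: nq; rewrite y0 mulr0; apply: Mloc_sub => //; exact: kmod0.
have claimA : forall x, J x -> Mloc P (Jf pr.1) x.
  move=> x Jx; case: (eqVneq x 0) => [->|nx]; first by apply: Mloc_sub => //; apply: kmod0.
  case: (classic (Rloc P (x / pr.2))) => [[s [ns [r er]]]|nr].
    by exists s; split => //; rewrite (fld11 ny er); apply: kmodR.
  have nz : x / pr.2 != 0 by rewrite mulf_neq0 // invr_eq0.
  have [s [ns [r er]]] := T3 Pm hN Pp qinv ez0 nz0 nz nr.
  exfalso; apply: nq; exists s; split => //.
  by rewrite (fld10 nx ny pnz er ez0) -tofracM; apply: kmodR.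
have [w [hw [nt [hR1 hR2]]]] := T4 Pm hN Pp qinv ez0 nz0 (hu pr.1).1.
apply: (fin P (uf pr.1 * w)) => //; exists pr.1; apply: colw => // x Jx.
exact: (Mloc_mul Ppr (JfK _) hR1 (claimA x Jx)).
Qed.

End Glob.

Section Mod.
Variable R : idomainType.
Local Notation K := {fraction R}.
Local Notation "x %:F" := (@tofrac R x).

Lemma sub0 n (A : vset R n) : submod A -> A 0. Proof. by case. Qed.
Lemma subD n (A : vset R n) x y : submod A -> A x -> A y -> A (x + y).
Proof. by case=> _ [H _]; apply: H. Qed.
Lemma subS n (A : vset R n) r x : submod A -> A x -> A (r%:F *: x).
Proof. by case=> _ [_ H]; apply: H. Qed.
Lemma subN n (A : vset R n) x : submod A -> A x -> A (- x).
Proof. by move=> AS Ax; rewrite -scaleN1r -tofrac1 -tofracN; apply: subS. Qed.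
Lemma subB n (A : vset R n) x y : submod A -> A x -> A y -> A (x - y).
Proof. by move=> AS Ax Ay; apply: subD => //; apply: subN. Qed.
Lemma sub_big n (A : vset R n) (I : Type) (l : seq I) (F : I -> 'rV[K]_n) : submod A ->
  (forall i, List.In i l -> A (F i)) -> A (\sum_(i <- l) F i).
Proof.
move=> AS; elim: l => [|i l IH] H; first by rewrite big_nil; apply: sub0.
rewrite big_cons; apply: subD => //; first by apply: H; left.
by apply: IH => j h; apply: H; right.
Qed.

Definition coef n (A : vset R n) (v : 'rV[K]_n) : K -> Prop := fun t => A (t *: v).

Lemma coef_kmod n (A : vset R n) v : submod A -> kmod (coef A v).
Proof.
move=> AS; split; first by rewrite /coef scale0r; apply: sub0.
split; first by move=> x y hx hy; rewrite /coef scalerDl; apply: subD.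
by move=> r x hx; rewrite /coef -scalerA; apply: subS.
Qed.

Definition kle (D E : K -> Prop) := exists u, u != 0 /\ forall t, D t -> E (u * t).

Lemma kle_trans D E F : kle D E -> kle E F -> kle D F.
Proof.
move=> [u [nu hu]] [u' [nu' hu']]; exists (u' * u); split; first by rewrite mulf_neq0.
by move=> t Dt; rewrite -mulrA; apply: hu'; apply: hu.
Qed.

Lemma kle_sub (D E : K -> Prop) : (forall t, D t -> E t) -> kle D E.
Proof. by move=> h; exists 1; split; [exact: oner_neq0 | move=> t /h; rewrite mul1r]. Qed.

Lemma kle_norm (D E : K -> Prop) : kmod E -> kle D E ->
  exists a : R, a != 0 /\ forall t, D t -> E (a%:F * t).
Proof.
move=> EK [u [nu hu]]; have [a [b [nb eab]]] := fracE u.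
have na : a != 0 by apply: contraNneq nu => a0; rewrite eab a0 tofrac0 mul0r.
exists a; split => // t Dt; have := kmodR b EK (hu t Dt).
by rewrite eab mulrA [b%:F * _]mulrC divfK // tofrac_eq0.
Qed.

Definition line m (B : vset R m) b0 :=
  B b0 /\ b0 != 0 /\ forall b, B b -> exists c, b = c *: b0.

Lemma hom0 n m (B : vset R n) (C : vset R m) f : hom B C f -> submod B -> f 0 = 0.
Proof.
move=> [fD _ _] BS; have := fD 0 0 (sub0 BS) (sub0 BS); rewrite addr0 => /eqP.
by rewrite eq_sym -subr_eq0 addrK => /eqP.
Qed.

Lemma scaleI n (c c' : K) (v : 'rV[K]_n) : v != 0 -> c *: v = c' *: v -> c = c'.
Proof.
move=> nv /eqP; rewrite -subr_eq0 -scalerBl scaler_eq0 (negbTE nv) orbF subr_eq0.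
by move/eqP.
Qed.

Lemma hom_scale n m (B : vset R n) (C : vset R m) f x (t : K) : hom B C f -> submod B ->
  B x -> B (t *: x) -> f (t *: x) = t *: f x.
Proof.
move=> [fD fS _] BS Bx Btx; have [a [b [nb eab]]] := fracE t.
have nbF : b%:F != 0 by rewrite tofrac_eq0.
have e1 : smul b (t *: x) = smul a x by rewrite /smul scalerA eab mulrC divfK.
have := congr1 f e1; rewrite fS // fS // /smul => e2.
apply: (@scalerI _ _ (b%:F)) => //; rewrite e2 scalerA eab mulrC divfK //.
Qed.

Lemma nz_coord n (v : 'rV[K]_n) : v != 0 -> exists i, v 0 i != 0.
Proof.
move=> nv; apply: NNPP => h; apply: (negP nv); apply/eqP/rowP => i; rewrite mxE.
by apply/eqP; apply: NNPP => h'; apply: h; exists i; apply/negP.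
Qed.

Lemma tle_kle n m (B : vset R n) (C : vset R m) b0 c0 : submod B -> submod C ->
  line B b0 -> line C c0 -> type_le B C -> kle (coef B b0) (coef C c0).
Proof.
move=> BS CS [Bb0 [nb0 lb]] [Cc0 [nc0 lc]] [f [[fD fS fC] finj]].
have [c ec] := lc _ (fC _ Bb0).
have nc : c != 0.
  apply: contraNneq nb0 => ec0; apply/eqP; apply: (finj b0 0 Bb0 (sub0 BS)).
  by rewrite ec ec0 scale0r (hom0 (And3 fD fS fC) BS).
exists c; split => // t Bt; rewrite /coef mulrC -scalerA -ec -(hom_scale (And3 fD fS fC) BS Bb0 Bt).
exact: fC.
Qed.

Lemma kle_tle n m (B : vset R n) (C : vset R m) b0 c0 : submod B -> submod C ->
  line B b0 -> line C c0 -> kle (coef B b0) (coef C c0) -> type_le B C.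
Proof.
move=> BS CS [Bb0 [nb0 lb]] [Cc0 [nc0 lc]] [u [nu hu]].
have [i ni] := nz_coord nb0.
pose cf (x : 'rV[K]_n) := x 0 i / b0 0 i.
have cfE : forall c, cf (c *: b0) = c by move=> c; rewrite /cf mxE mulfK.
exists (fun x => (cf x * u) *: c0); split.
  split.
  - by move=> x y _ _; rewrite /cf mxE mulrDl mulrDl scalerDl.
  - by move=> r x _; rewrite /smul /cf mxE scalerA !mulrA.
  - move=> x Bx; have [c ex] := lb _ Bx; rewrite ex cfE mulrC; apply: hu.
    by rewrite /coef -ex.
move=> x y Bx By; have [c ->] := lb _ Bx; have [c' ->] := lb _ By.
rewrite !cfE => /(scaleI nc0) /mulIf => h; by rewrite h.
Qed.

Definition hullv n (A : vset R n) a : vset R n := fun x => A x /\ exists t, x = t *: a.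

Lemma hull_submod n (A : vset R n) a : submod A -> submod (hullv A a).
Proof.
move=> AS; split; first by split; [apply: sub0 | exists 0; rewrite scale0r].
split.
  move=> x y [Ax [t ex]] [Ay [t' ey]]; split; first exact: (subD AS Ax Ay).
  by exists (t + t'); rewrite ex ey scalerDl.
move=> r x [Ax [t ex]]; split; first exact: (subS r AS Ax).
by exists (r%:F * t); rewrite /smul ex scalerA.
Qed.

Lemma hull_pure n (A : vset R n) a : submod A -> pure_in (hullv A a) A.
Proof.
move=> AS; split; first by split; [apply: hull_submod | move=> x []].
move=> r x Ax [_ [t et]]; case: (eqVneq r 0) => [->|nr].
  exists 0; split; first by split; [apply: sub0 | exists 0; rewrite scale0r].
  by rewrite /smul tofrac0 !scale0r.
have nrF : r%:F != 0 by rewrite tofrac_eq0.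
exists x; split => //; split => //; exists (t / r%:F).
move: et; rewrite /smul => et.
by rewrite -[x](scalerK nrF) et scalerA mulrC.
Qed.

Lemma pure_line n (A P : vset R n) y t : pure_in P A -> P y -> A (t *: y) -> P (t *: y).
Proof.
move=> [[PS PA] Pp] Py Aty; have [a [b [nb eab]]] := fracE t.
have nbF : b%:F != 0 by rewrite tofrac_eq0.
have : P (smul b (t *: y)).
  by rewrite /smul scalerA eab mulrC divfK //; apply: subS.
move=> /(Pp b _ Aty) [b' [Pb' e]]; move: e; rewrite /smul => /(scalerI nbF) ->.
exact: Pb'.
Qed.

Lemma elem_hullE n (A : vset R n) a : submod A -> A a -> elem_hull A a = hullv A a.
Proof.
move=> AS Aa; apply: functional_extensionality => x; apply: propositional_extensionality.
split.
  move=> h; apply: h; first exact: hull_pure.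
  by move=> y ->; split => //; exists 1; rewrite scale1r.
move=> [Ax [t ex]] P Ppure sub; rewrite ex; apply: (pure_line (A := A) Ppure (sub a erefl)); by rewrite -ex.
Qed.

Lemma hull_line n (A : vset R n) a : A a -> a != 0 -> line (hullv A a) a.
Proof.
move=> Aa na; split; first by split => //; exists 1; rewrite scale1r.
by split => // b [_ [t ->]]; exists t.
Qed.

Lemma coef_hull n (A : vset R n) a t : coef (hullv A a) a t <-> coef A a t.
Proof. by split; [case | move=> h; split => //; exists t]. Qed.

End Mod.

Lemma choice_fun (X Y : Type) (Q : X -> Y -> Prop) :
  (forall x, exists y, Q x y) -> exists f : X -> Y, forall x, Q x (f x).
Proof.
move=> H; exists (fun x => proj1_sig (constructive_indefinite_description _ (H x))).
by move=> x; exact: proj2_sig (constructive_indefinite_description _ (H x)).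
Qed.

Section Gen.
Variable R : idomainType.
Local Notation K := {fraction R}.
Local Notation "x %:F" := (@tofrac R x).

Lemma smul1 n (x : 'rV[K]_n) : smul 1 x = x.
Proof. by rewrite /smul tofrac1 scale1r. Qed.

Lemma gen_of n m (A : vset R n) (P : vset R m) :
  (forall y, P y -> exists s : seq (('rV[K]_n -> 'rV[K]_m) * 'rV[K]_n),
     (forall pr, List.In pr s -> hom A P pr.1 /\ A pr.2) /\
     y = \sum_(pr <- s) pr.1 pr.2) ->
  generated_by A P.
Proof.
move=> H; exists {f : 'rV[K]_n -> 'rV[K]_m | hom A P f}, (fun i => sval i).
split; first by move=> [f hf].
move=> y Py; have [s [hs ->]] := H y Py.
elim: s hs => [|pr s IH] hs.
  by exists [::]; split; [constructor | rewrite !big_nil].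
have [h1 h2] := hs pr (or_introl erefl).
have [s' [fs' es']] := IH (fun pr' h => hs pr' (or_intror h)).
exists ((exist _ pr.1 h1, pr.2) :: s'); split; first by constructor.
by rewrite !big_cons es'.
Qed.

Lemma gen_nonzero n m (A : vset R n) (P : vset R m) y : generated_by A P -> P y ->
  y != 0 -> exists f a, hom A P f /\ A a /\ f a != 0.
Proof.
move=> [I [f [hf H]]] Py ny; have [s [fs ey]] := H y Py.
apply: NNPP => h; move/negP: ny; apply; apply/eqP; rewrite ey.
elim: s fs {ey} => [|p s IH] fs; first by rewrite big_nil.
case/List.Forall_cons_iff: fs => h1 h2; rewrite big_cons IH // addr0.
apply/eqP; apply: NNPP => h'; apply: h; exists (f p.1), p.2; split => //.
by split => //; apply/negP.
Qed.

Lemma hom_mono n m (A : vset R n) (C C' : vset R m) f : hom A C f ->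
  (forall x, C x -> C' x) -> hom A C' f.
Proof. by move=> [h1 h2 h3] h; split => // x /h3 /h. Qed.

Lemma rank1_line m (B : vset R m) b0 : submod B -> line B b0 -> rank1 B.
Proof. by move=> BS [h1 [h2 h3]]; split => //; exists b0; split. Qed.

Lemma line_rank1 m (B : vset R m) : rank1 B -> submod B /\ exists b0, line B b0.
Proof. by move=> [BS [b0 [h1 h2 h3]]]; split => //; exists b0. Qed.

Lemma b_to_a n (A : vset R n) : submod A ->
  (forall P, pure_in P A -> rank1 P -> generated_by A P) -> self_pure_generator A.
Proof.
move=> AS hb P Pp; apply: gen_of => y Py.
have PA : forall x, P x -> A x by case: Pp => [[_ h] _].
case: (eqVneq y 0) => [->|ny]; first by exists [::]; split => //; rewrite big_nil.
have Ay := PA y Py.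
have hl := hull_line Ay ny.
have [I [f [hf G]]] := hb _ (hull_pure y AS) (rank1_line (hull_submod y AS) hl).
have [s [fs ey]] := G y hl.1.
exists (map (fun pr => (f pr.1, pr.2)) s); split; last by rewrite big_map.
move=> pr hpr; have [pr' [h ->]] := In_map hpr; split => /=.
  apply: hom_mono (hf pr'.1) _ => x [Ax [t ex]]; rewrite ex.
  by apply: (pure_line Pp Py); rewrite -ex.
by move: fs; rewrite List.Forall_forall => /(_ _ h).
Qed.


Lemma phi_scale n (A : vset R n) (phi : 'rV[K]_n -> K) x t : submod A ->
  (forall s x, A x -> phi (s%:F *: x) = s%:F * phi x) -> A x -> A (t *: x) ->
  phi (t *: x) = t * phi x.
Proof.
move=> AS phiS Ax Atx; have [a [b [nb eab]]] := fracE t.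
have nbF : b%:F != 0 by rewrite tofrac_eq0.
have e1 : b%:F *: (t *: x) = a%:F *: x by rewrite scalerA eab mulrC divfK.
have := congr1 phi e1; rewrite phiS // phiS // => e2.
apply: (mulfI nbF); rewrite e2 mulrA eab [b%:F * _]mulrC divfK //.
Qed.

Lemma phi0 n (A : vset R n) (phi : 'rV[K]_n -> K) : submod A ->
  (forall x y, A x -> A y -> phi (x + y) = phi x + phi y) -> phi 0 = 0.
Proof.
move=> AS phiD; have := phiD 0 0 (sub0 AS) (sub0 AS); rewrite addr0 => /eqP.
by rewrite eq_sym -subr_eq0 addrK => /eqP.
Qed.

Lemma phiB n (A : vset R n) (phi : 'rV[K]_n -> K) x y : submod A ->
  (forall x y, A x -> A y -> phi (x + y) = phi x + phi y) -> A x -> A y ->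
  phi (x - y) = phi x - phi y.
Proof.
move=> AS phiD Ax Ay; have := phiD (x - y) y (subB AS Ax Ay) Ay.
by rewrite subrK => ->; rewrite addrK.
Qed.

Lemma phi_big n (A : vset R n) (phi : 'rV[K]_n -> K) (I : Type) (l : seq I) F : submod A ->
  (forall x y, A x -> A y -> phi (x + y) = phi x + phi y) ->
  (forall i, List.In i l -> A (F i)) -> phi (\sum_(i <- l) F i) = \sum_(i <- l) phi (F i).
Proof.
move=> AS phiD; elim: l => [|i l IH] H; first by rewrite !big_nil (phi0 AS phiD).
rewrite !big_cons phiD; first by rewrite IH // => j h; apply: H; right.
  by apply: H; left.
by apply: sub_big => // j h; apply: H; right.
Qed.

Lemma proj_data n m (A : vset R n) (B : vset R m) : submod A -> rank1 B ->
  quasi_summand A B -> type_is_IT A B ->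
  exists b' (phi : 'rV[K]_n -> K) (r : R), [/\ A b', b' != 0, r != 0, phi b' = r%:F &
   [/\ (forall x y, A x -> A y -> phi (x + y) = phi x + phi y),
       (forall s x, A x -> phi (s%:F *: x) = s%:F * phi x),
       (forall x, A x -> A (phi x *: b')) &
       (forall a, A a -> a != 0 -> kle (coef A b') (coef A a))]].
Proof.
move=> AS [BS [b0 [Bb0 nb0 lb]]] [B' [C [[B'S B'A] [CS CA] ind
  [_ [r [s [nr ns rS sA]]]] [f [g [r1 [s1 [[hf hg nr1 ns1] [gf fg]]]]]]]]] [_ Hle _].
have [_ _ gB] := hg; have [_ _ fB] := hf.
pose b' := g b0.
have B'b' : B' b' := gB _ Bb0.
have nb' : b' != 0.
  apply/eqP => b'0; move: (fg _ Bb0); rewrite -/b' b'0 (hom0 hf B'S) /smul.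
  move/esym/eqP; rewrite scaler_eq0 tofrac_eq0 (negbTE ns1) (negbTE nb0) //.
have nr1F : r1%:F != 0 by rewrite tofrac_eq0.
have lineB' : forall x, B' x -> exists c, x = c *: b'.
  move=> x B'x; have [c ec] := lb _ (fB _ B'x).
  have Bc : B (c *: b0) by rewrite -ec; apply: fB.
  exists (c / r1%:F); move: (gf _ B'x); rewrite ec (hom_scale hg BS Bb0 Bc) /smul.
  by move=> e; rewrite -[x](scalerK nr1F) -e scalerA mulrC.
have kle1 : kle (coef B' b') (coef B b0).
  exists s1%:F; split; first by rewrite tofrac_eq0.
  move=> t Bt; rewrite /coef mulrC -scalerA -/(smul s1 b0) -fg // -/b'.
  by rewrite -(hom_scale hf B'S B'b' Bt); apply: fB.
have [phi hphi] : exists phi : 'rV[K]_n -> K, forall a, A a ->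
    B' (phi a *: b') /\ exists γ, C γ /\ smul r a = phi a *: b' + γ.
  apply: (choice_fun (Q := fun a c => A a -> B' (c *: b') /\ exists γ, C γ /\ smul r a = c *: b' + γ)) => a; case: (classic (A a)) => [Aa|nAa]; last by exists 0.
  have [β [γ [Bβ Cγ e]]] := rS a Aa; have [c ec] := lineB' β Bβ.
  by exists c => _; split; [rewrite -ec | exists γ; split => //; rewrite e ec].
have uniq : forall c c' γ γ', B' (c *: b') -> B' (c' *: b') -> C γ -> C γ' ->
    c *: b' + γ = c' *: b' + γ' -> c = c'.
  move=> c c' γ γ' h1 h2 h3 h4 e.
  have e2 : c *: b' = c' *: b' + (γ' - γ) by rewrite addrA -e addrK.
  have e' : c *: b' - c' *: b' = γ' - γ by rewrite e2 addrAC subrr add0r.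
  have hC : C (c *: b' - c' *: b') by rewrite e'; apply: subB.
  have := ind _ (subB B'S h1 h2) hC.
  move/eqP; rewrite -scalerBl scaler_eq0 (negbTE nb') orbF subr_eq0 => /eqP //.
have phiD : forall x y, A x -> A y -> phi (x + y) = phi x + phi y.
  move=> x y Ax Ay; have [h1 [γ1 [c1 e1]]] := hphi x Ax.
  have [h2 [γ2 [c2 e2]]] := hphi y Ay.
  have [h3 [γ3 [c3 e3]]] := hphi _ (subD AS Ax Ay).
  apply: (uniq _ _ γ3 (γ1 + γ2)) => //; first by rewrite scalerDl; apply: subD.
    exact: subD.
  by rewrite -e3 scalerDl addrACA -e1 -e2 /smul scalerDr.
have phiS : forall s x, A x -> phi (s%:F *: x) = s%:F * phi x.
  move=> s' x Ax; have [h1 [γ1 [c1 e1]]] := hphi x Ax.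
  have [h3 [γ3 [c3 e3]]] := hphi _ (subS s' AS Ax).
  apply: (uniq _ _ γ3 (s'%:F *: γ1)) => //; first by rewrite -scalerA; apply: subS.
    exact: subS.
  by rewrite -e3 -scalerA -scalerDr -e1 /smul !scalerA mulrC.
have Ab' := B'A _ B'b'.
have phib' : phi b' = r%:F.
  have [h1 [γ1 [c1 e1]]] := hphi b' Ab'.
  apply: (uniq _ _ γ1 0) => //; first exact: subS.
    exact: sub0.
  by rewrite -e1 addr0.
exists b', phi, r; split => //; split => //.
  by move=> x Ax; apply: B'A; case: (hphi x Ax).
move=> a Aa na.
have k3 : kle (coef B b0) (coef A a).
  have hB : type_le B (hullv A a) by rewrite -(elem_hullE AS Aa); exact: Hle a Aa na.
  have k := tle_kle BS (hull_submod a AS) (conj Bb0 (conj nb0 lb)) (hull_line Aa na) hB.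
  by apply: (kle_trans k); apply: kle_sub => t /coef_hull.
have k0 : kle (coef A b') (coef B' b').
  exists r%:F; split; first by rewrite tofrac_eq0.
  move=> t At; have := (hphi _ At).1.
  by rewrite (phi_scale AS phiS Ab' At) phib' /coef mulrC.
exact: (kle_trans k0 (kle_trans kle1 k3)).
Qed.

End Gen.

Section Main1.
Variable R : idomainType.
Local Notation K := {fraction R}.
Local Notation "x %:F" := (@tofrac R x).

Definition imJ n (A : vset R n) (phi : 'rV[K]_n -> K) := fun t => exists a, A a /\ t = phi a.

Lemma imJ_kmod n (A : vset R n) phi : submod A ->
  (forall x y, A x -> A y -> phi (x + y) = phi x + phi y) ->
  (forall s x, A x -> phi (s%:F *: x) = s%:F * phi x) -> kmod (imJ A phi).
Proof.
move=> AS phiD phiS; split; first by exists 0; split; [apply: sub0 | rewrite (phi0 AS phiD)].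
split; first by move=> x y [a [Aa ->]] [b [Ab ->]]; exists (a + b); split; [apply: subD | rewrite phiD].
by move=> r x [a [Aa ->]]; exists (r%:F *: a); split; [apply: subS | rewrite phiS].
Qed.

Lemma c_to_b (hR : dedekind R) n (A : vset R n) : submod A ->
  (exists m (B : vset R m), [/\ rank1 B, quasi_summand A B & type_is_IT A B]) ->
  forall P, pure_in P A -> rank1 P -> generated_by A P.
Proof.
move=> AS [m [B [B1 qsB IT]]].
have [b' [phi [r [Ab' nb' nr phib' [phiD phiS phiA phile]]]]] := proj_data AS B1 qsB IT.
move=> P Pp P1; apply: gen_of => y Py.
have PA : forall x, P x -> A x by case: Pp => [[_ h] _].
case: (eqVneq y 0) => [->|ny]; first by exists [::]; split => //; rewrite big_nil.
have Ay := PA y Py.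
have JK := imJ_kmod AS phiD phiS.
have Jsub : forall t, imJ A phi t -> coef A b' t by move=> t [a [Aa ->]]; exact: phiA.
have [u [nu hu]] : kle (imJ A phi) (coef A y).
  exact: (kle_trans (kle_sub Jsub) (phile y Ay ny)).
have Jr : exists d, imJ A phi d /\ d != 0.
  by exists (r%:F); split; [exists b' | rewrite tofrac_eq0].
have E1 : coef A y 1 by rewrite /coef scale1r.
have [l [hl e1]] := F1 hR JK (coef_kmod y AS) Jr nu hu E1.
suff : exists s : seq (('rV[K]_n -> 'rV[K]_n) * 'rV[K]_n),
    (forall pr, List.In pr s -> hom A P pr.1 /\ A pr.2) /\
    (\sum_(pr <- l) pr.1 * pr.2) *: y = \sum_(pr <- s) pr.1 pr.2.
  by rewrite -e1 scale1r.
elim: l hl {e1} => [|pr l IH] hl.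
  by exists [::]; split => //; rewrite !big_nil scale0r.
have [h1 [a [Aa e2]]] := hl pr (or_introl erefl).
have [s [hs es]] := IH (fun pr' h => hl pr' (or_intror h)).
exists ((fun x => (pr.1 * phi x) *: y, a) :: s); split.
  move=> pr' [<-|h]; last exact: hs.
  split => //=; split.
  - by move=> x z Ax Az; rewrite phiD // mulrDr scalerDl.
  - by move=> s' x Ax; rewrite phiS // /smul scalerA mulrCA.
  - move=> x Ax; apply: (pure_line Pp Py); apply: h1; by exists x.
by rewrite !big_cons scalerDl es e2.
Qed.

Lemma d_to_c n (A : vset R n) : submod A ->
  (exists B : vset R n, [/\ rank1 B, direct_summand A B & type_is_IT A B]) ->
  exists m (B : vset R m), [/\ rank1 B, quasi_summand A B & type_is_IT A B].
Proof.
move=> AS [B [B1 [[BS BA] [C [[CS CA] ind hA]]] IT]].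
exists n, B; split => //; exists B, C; split => //.
  split.
    move=> x; split; move=> [c [a [h ->]]]; exists c, a; split => //; by apply/hA.
  exists 1, 1; split; try exact: oner_neq0.
    by move=> c Ac; rewrite smul1; apply/hA.
  by move=> a h; rewrite smul1; apply/hA.
have hid : hom B B id by split; move=> *.
exists id, id, 1, 1; split; first by split => //; exact: oner_neq0.
by split => x _; rewrite smul1.
Qed.


Lemma c_to_d (hR : dedekind R) n (A : vset R n) : submod A ->
  (exists m (B : vset R m), [/\ rank1 B, quasi_summand A B & type_is_IT A B]) ->
  exists B : vset R n, [/\ rank1 B, direct_summand A B & type_is_IT A B].
Proof.
move=> AS [m [B [B1 qsB IT]]].
have [b' [phi [r [Ab' nb' nr phib' [phiD phiS phiA phile]]]]] := proj_data AS B1 qsB IT.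
have JK := imJ_kmod AS phiD phiS.
have ph0 := phi0 AS phiD.
have phiK : forall x t, A x -> A (t *: x) -> phi (t *: x) = t * phi x.
  by move=> x t; apply: phi_scale.
pose I := {a : 'rV[K]_n | A a /\ phi a != 0}.
pose Jf := fun i : I => fun t => exists e, coef A (sval i) e /\ t = e * phi (sval i).
have JfK : forall i, kmod (Jf i).
  move=> [a [Aa na]]; rewrite /Jf /=; split.
    by exists 0; split; [rewrite /coef scale0r; apply: sub0 | rewrite mul0r].
  split.
    move=> x y [e [he ->]] [e' [he' ->]]; exists (e + e'); split; last by rewrite mulrDl.
    exact: (kmodD (coef_kmod a AS) he he').
  move=> s x [e [he ->]]; exists (s%:F * e); split; last by rewrite mulrA.
  exact: (kmodR s (coef_kmod a AS) he).
have Jfsub : forall i x, Jf i x -> imJ A phi x.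
  move=> [a [Aa na]] x [e [he ->]] /=; exists (e *: a); split => //.
  by rewrite phiK.
have Jdec : forall x, imJ A phi x -> exists l : seq (I * K),
    (forall pr, List.In pr l -> Jf pr.1 pr.2) /\ x = \sum_(pr <- l) pr.2.
  move=> x [a [Aa ->]]; case: (eqVneq (phi a) 0) => [->|na].
    by exists [::]; split => //; rewrite big_nil.
  exists [:: (exist _ a (conj Aa na), phi a)]; split; last by rewrite big_seq1.
  move=> pr [<-|[]] /=; exists 1; split; [by rewrite /coef scale1r | by rewrite mul1r].
have [uf huf] : exists uf : I -> K, forall i,
    uf i != 0 /\ forall x, imJ A phi x -> Jf i (uf i * x).
  apply: (choice_fun (Q := fun i u => u != 0 /\ forall x, imJ A phi x -> Jf i (u * x))).
  move=> [a [Aa na]].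
  have nza : a != 0 by apply/eqP => a0; move: na; rewrite a0 ph0 eqxx.
  have [u0 [nu0 hu0]] := phile a Aa nza.
  exists (u0 * phi a); split; first by rewrite mulf_neq0.
  move=> x [a' [Aa' ->]]; exists (u0 * phi a'); split; first by apply: hu0; apply: phiA.
  by rewrite /= mulrAC.
have Jnz : exists j, imJ A phi j /\ j != 0.
  by exists r%:F; split; [exists b' | rewrite tofrac_eq0].
have [l [hl e1]] := lemS hR JK Jnz JfK Jfsub Jdec huf.
have [cs [hcs ecs]] : exists cs : seq (K * 'rV[K]_n),
    (forall pr, List.In pr cs -> A pr.2 /\ forall x, A x -> A ((phi x * pr.1) *: pr.2)) /\
    \sum_(pr <- cs) pr.1 * phi pr.2 = 1.
  rewrite e1; elim: l hl {e1} => [|t l IH] hl.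
    by exists [::]; split => //; rewrite !big_nil.
  have [[a [Aa na]] ht] := hl t (or_introl erefl).
  have [cs [hcs ecs]] := IH (fun t' h => hl t' (or_intror h)).
  exists ((t / phi a, a) :: cs); split.
    move=> pr [<-|h]; last exact: hcs.
    split => // x Ax /=.
    have [e [he ee]] := ht (phi x) (ex_intro _ x (conj Ax erefl)).
    have -> : phi x * (t / phi a) = (t * phi x) / phi a by rewrite mulrA [phi x * t]mulrC.
    by rewrite ee /= mulfK.
  by rewrite !big_cons ecs /= divfK.
pose w := \sum_(pr <- cs) pr.1 *: pr.2.
have P12 : forall x, A x -> A (phi x *: w) /\ phi (phi x *: w) = phi x.
  move=> x Ax; rewrite -[X in _ = X]mulr1 -ecs /w.
  elim: cs hcs {ecs w} => [|pr cs IH] hcs.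
    by rewrite !big_nil scaler0 ph0 mulr0; split => //; apply: sub0.
  have [h1 h2] := hcs pr (or_introl erefl).
  have [IH1 IH2] := IH (fun pr' h => hcs pr' (or_intror h)).
  have hA1 : A ((phi x * pr.1) *: pr.2) := h2 x Ax.
  rewrite !big_cons scalerDr scalerA; split; first exact: subD.
  by rewrite phiD // IH2 phiK // mulrDr mulrA.
have P1 x Ax := (P12 x Ax).1.
have P2 x Ax := (P12 x Ax).2.
have Arw : A (r%:F *: w) by have := P1 b' Ab'; rewrite phib'.
have prw : phi (r%:F *: w) = r%:F by have := P2 b' Ab'; rewrite phib'.
have nrF : r%:F != 0 by rewrite tofrac_eq0.
have P3 : forall t, A (t *: w) -> phi (t *: w) = t.
  move=> t Atw; have e : t *: w = (t / r%:F) *: (r%:F *: w) by rewrite scalerA divfK.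
  by rewrite e phiK // ?prw ?divfK // -e.
have nrw : r%:F *: w != 0.
  by apply: contraNneq nrF => e; rewrite -prw e ph0.
have lineH : line (hullv A w) (r%:F *: w).
  split; first by split => //; exists r%:F.
  split => // x [Ax [t ->]]; exists (t / r%:F); by rewrite scalerA divfK.
have HS := hull_submod w AS.
have H1 : rank1 (hullv A w) := rank1_line HS lineH.
exists (hullv A w); split => //.
  split; first by split => // x [].
  exists (fun x => A x /\ phi x = 0); split.
  - split; last by move=> x [].
    split; first by split; [apply: sub0 | exact: ph0].
    split; first by move=> x y [Ax px] [Ay py]; split; [apply: subD | rewrite phiD // px py addr0].
    by move=> s x [Ax px]; split; [apply: subS | rewrite phiS // px mulr0].
  - move=> x [Ax [t ex]] [_ px]; have At : A (t *: w) by rewrite -ex.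
    by move: px; rewrite ex (P3 t At) => t0; rewrite t0 scale0r.
  - move=> a; split.
      move=> Aa; exists (phi a *: w), (a - phi a *: w); split.
      + by split; [apply: P1 | exists (phi a)].
      + split; first by apply: subB => //; apply: P1.
        by rewrite (phiB AS phiD Aa (P1 a Aa)) P2 // subrr.
      + by rewrite addrC subrK.
    by move=> [b [c [[Ab _] [Ac _] ->]]]; apply: subD.
split => //.
  move=> a Aa na; rewrite (elem_hullE AS Aa).
  apply: (kle_tle HS (hull_submod a AS) lineH (hull_line Aa na)).
  have [u0 [nu0 hu0]] := phile a Aa na.
  exists (u0 * r%:F); split; first by rewrite mulf_neq0.
  move=> t [Atrw _]; apply/coef_hull.
  have Ht : phi (t *: (r%:F *: w)) = t * r%:F by rewrite scalerA P3 // -scalerA.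
  have := hu0 _ (phiA _ Atrw); rewrite Ht.
  by rewrite [t * _]mulrC mulrA.
move=> m' C' C1 hC.
have [C'S [c0 lc0]] := line_rank1 C1.
have hb := hC b' Ab' nb'; rewrite (elem_hullE AS Ab') in hb.
have k := tle_kle C'S (hull_submod b' AS) lc0 (hull_line Ab' nb') hb.
apply: (kle_tle C'S HS lc0 lineH); apply: (kle_trans k); apply: kle_sub => t /coef_hull At.
have := P1 _ At; rewrite phiK // phib' => h; split.
  by rewrite scalerA.
by exists (t * r%:F); rewrite scalerA.
Qed.

End Main1.

Lemma bound_bad (G : Type) (gs : seq G) (Bad : G -> nat -> Prop) :
  (forall g, List.In g gs -> forall i j, Bad g i -> Bad g j -> i = j) ->
  exists N, forall g, List.In g gs -> forall i, (N <= i)%N -> ~ Bad g i.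
Proof.
elim: gs => [|g gs IH] H; first by exists 0%N.
have [N HN] := IH (fun g' h => H g' (or_intror h)).
case: (classic (exists i, Bad g i)) => [[b hb]|nb].
  exists (maxn N b.+1) => g' [<-|h] i hi.
    move=> hi'; have := H g (or_introl erefl) _ _ hb hi'.
    by move=> e; move: hi; rewrite -e geq_max ltnn andbF.
  by apply: HN => //; apply: leq_trans hi; rewrite leq_maxl.
exists N => g' [<-|h] i hi; first by move=> hi'; apply: nb; exists i.
exact: HN.
Qed.

Lemma fld13 (F : fieldType) (u0 f e t : F) : f != 0 ->
  u0 * f * t * (e / f) = u0 * (e * t).
Proof. by move=> h; field. Qed.
Lemma fld14 (F : fieldType) (nn g1 g2 c : F) : g2 != 0 ->
  nn * g1 * c = g2 * (nn * c) * (g1 / g2).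
Proof. by move=> h; field. Qed.

Lemma In_mem (T : eqType) (x : T) s : List.In x s -> x \in s.
Proof. elim: s => //= y s IH [->|h]; rewrite inE; first by rewrite eqxx. by rewrite IH ?orbT. Qed.
Lemma mem_In (T : eqType) (x : T) s : x \in s -> List.In x s.
Proof.
elim: s => //= y s IH; rewrite inE => /orP [/eqP ->|h]; [by left | by right; apply: IH].
Qed.
Lemma In_map_f (X Y : Type) (f : X -> Y) x l : List.In x l -> List.In (f x) (map f l).
Proof. elim: l => //= y l IH [->|h]; [by left | by right; apply: IH]. Qed.

Section Main2.
Variable R : idomainType.
Local Notation K := {fraction R}.
Local Notation "x %:F" := (@tofrac R x).

Definition rlin n (A : vset R n) (f : 'rV[K]_n -> 'rV[K]_n) :=
  (forall x y, A x -> A y -> f (x + y) = f x + f y) /\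
  (forall s x, A x -> f (s%:F *: x) = s%:F *: f x).

Lemma hom_rlin n (A C : vset R n) f : hom A C f -> rlin A f.
Proof. by case=> h1 h2 _; split. Qed.

Lemma pow_inj (u : R) i j : u != 0 -> u \notin GRing.unit -> u ^+ i = u ^+ j -> i = j.
Proof.
move=> nu nun.
wlog lij : i j / (i <= j)%N.
  by move=> W e; case: (leqP i j) => h; [apply: W | apply/esym/W => //; apply: ltnW].
move=> e; apply/eqP; rewrite eqn_leq lij /=; apply: contraNT nun; rewrite -ltnNge => ltij.
have e1 : u ^+ i * u ^+ (j - i) = u ^+ i * 1 by rewrite -exprD subnKC // mulr1 e.
have := mulfI (expf_neq0 i nu) e1 => e2.
have ij0 : (0 < j - i)%N by rewrite subn_gt0.
by rewrite -(unitrX_pos u ij0) e2 unitr1.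
Qed.

Lemma avoid n (A : vset R n) (u : R) : submod A -> u != 0 -> u \notin GRing.unit ->
  forall fs : seq ('rV[K]_n -> 'rV[K]_n),
  (forall f, List.In f fs -> rlin A f /\ exists a, A a /\ f a != 0) ->
  exists z, A z /\ forall f, List.In f fs -> f z != 0.
Proof.
move=> AS nu nun; elim=> [|f fs IH] H; first by exists 0; split => //; apply: sub0.
have [z' [Az' hz']] := IH (fun g h => H g (or_intror h)).
have [[fD fS] [y [Ay fy]]] := H f (or_introl erefl).
pose v i := z' + (u ^+ i)%:F *: y.
have Av : forall i, A (v i) by move=> i; apply: subD => //; apply: subS.
have HB : forall g, List.In g (f :: fs) ->
    forall i j, g (v i) = 0 -> g (v j) = 0 -> i = j.
  move=> g hg i j hi hj.
  have [[gD gS] _] := H g hg.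
  have gv : forall k, g (v k) = g z' + (u ^+ k)%:F *: g y.
    by move=> k; rewrite gD ?gS //; apply: subS.
  have ngy : g z' != 0 \/ g y != 0.
    by case: hg => [<-|h]; [right | left; apply: hz'].
  apply: (pow_inj nu nun); apply: NNPP => nij.
  have e0 : (u ^+ i)%:F *: g y = (u ^+ j)%:F *: g y.
    have := hi; rewrite gv => /eqP; rewrite addrC addr_eq0 => /eqP ->.
    by have := hj; rewrite gv => /eqP; rewrite addrC addr_eq0 => /eqP ->.
  move/eqP: e0; rewrite -subr_eq0 -scalerBl -tofracB scaler_eq0 tofrac_eq0 subr_eq0.
  case/orP => [/eqP //|/eqP gy0].
  move: hi; rewrite gv gy0 scaler0 addr0 => gz0.
  by case: ngy => /eqP; [|rewrite gy0].
have [N HN] := bound_bad HB.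
exists (v N); split => // g hg; apply/eqP; exact: HN g hg N (leqnn N).
Qed.


Lemma field_case n (A : vset R n) : submod A -> (forall u : R, u != 0 -> u \in GRing.unit) ->
  forall a t, A a -> A (t *: a).
Proof.
move=> AS hu a t Aa; have [x [y [ny ->]]] := fracE t.
have hy : y%:F * (y^-1)%:F = 1 by rewrite -tofracM mulrV ?hu // tofrac1.
have -> : x%:F / y%:F = (x * y^-1)%:F.
  by rewrite tofracM -[LHS]mulr1 -hy mulrA divfK // tofrac_eq0.
exact: subS.
Qed.

Lemma generic n (A : vset R n) (fs : seq ('rV[K]_n -> 'rV[K]_n)) (g0 : 'rV[K]_n -> 'rV[K]_n) :
  submod A ->
  (forall f, List.In f (g0 :: fs) -> rlin A f /\ exists a, A a /\ f a != 0) ->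
  (forall z, A z -> (forall f, List.In f fs -> f z != 0) ->
     forall a, A a -> a != 0 -> kle (coef A z) (coef A a)) ->
  exists z, A z /\ g0 z != 0 /\ forall a, A a -> a != 0 -> kle (coef A z) (coef A a).
Proof.
move=> AS H Ht.
case: (classic (exists u : R, u != 0 /\ u \notin GRing.unit)) => [[u [nu nun]]|hf].
  have [z [Az hz]] := avoid AS nu nun H.
  exists z; split => //; split; first by apply: hz; left.
  by apply: Ht => // f h; apply: hz; right.
have hu : forall u : R, u != 0 -> u \in GRing.unit.
  by move=> u nu; apply: NNPP => h; apply: hf; exists u; split => //; apply/negP.
have [_ [a [Aa ga]]] := H g0 (or_introl erefl).
exists a; split => //; split => // a' Aa' _.
by apply: kle_sub => t _; apply: field_case.
Qed.

Lemma max_free n (A : vset R n) : exists xs : seq 'rV[K]_n,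
  (forall x, x \in xs -> A x) /\ free xs /\ forall a, A a -> a \in <<xs>>%VS.
Proof.
have sz : forall xs : seq 'rV[K]_n, free xs -> (size xs <= n)%N.
  move=> xs /eqP <-; have := dimvS (subvf <<xs>>%VS).
  rewrite dimvf => h; apply: leq_trans h _; by rewrite (dim_matrix _ 1 n) mul1r.
pose Pn j := (j <= n)%N /\ exists xs : seq 'rV[K]_n,
  (forall x, x \in xs -> A x) /\ free xs /\ size xs = (n - j)%N.
have Pnn : Pn n.
  split => //; exists [::]; split => //; split; last by rewrite subnn.
  by rewrite /free span_nil dimv0.
have [j [[ljn [xs [hA [fr sx]]]] minj]] := ex_min_nat (ex_intro Pn n Pnn).
exists xs; split => //; split => // a Aa; apply: NNPP => na.
have fr' : free (a :: xs) by rewrite free_cons fr andbT; apply/negP.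
have := sz _ fr'; rewrite /= sx => h.
case: j ljn sx minj h => [|k] ljn sx minj h; first by rewrite subn0 ltnn in h.
apply: (minj k (ltnSn k)); split; first exact: ltnW.
exists (a :: xs); split.
  by move=> x; rewrite inE => /orP [/eqP ->|/hA].
by split => //=; rewrite sx subnSK.
Qed.

Lemma span_kle n (A : vset R n) z (xs : seq 'rV[K]_n) : submod A ->
  (forall x, x \in xs -> kle (coef A z) (coef A x)) ->
  forall a, a \in <<xs>>%VS -> kle (coef A z) (coef A a).
Proof.
move=> AS H a ha.
pose S v := exists u0 : R, u0 != 0 /\ forall t, coef A z t -> A ((u0%:F * t) *: v).
have CK := coef_kmod z AS.
have S0 : S 0.
  by exists 1; split; [exact: oner_neq0 | move=> t _; rewrite scaler0; apply: sub0].
have SD : forall v1 v2, S v1 -> S v2 -> S (v1 + v2).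
  move=> v1 v2 [u1 [n1 h1]] [u2 [n2 h2]]; exists (u1 * u2); split; first by rewrite mulf_neq0.
  move=> t ht; rewrite scalerDr; apply: subD => //.
    have -> : (u1 * u2)%:F * t = u1%:F * (u2%:F * t) by rewrite tofracM mulrA.
    exact: h1 _ (kmodR u2 CK ht).
  have -> : (u1 * u2)%:F * t = u2%:F * (u1%:F * t) by rewrite tofracM [u1%:F * _]mulrC mulrA.
  exact: h2 _ (kmodR u1 CK ht).
have SZ : forall c v, S v -> S (c *: v).
  move=> c v [u0 [n0 h0]]; have [e [f [nf ->]]] := fracE c.
  exists (u0 * f); split; first by rewrite mulf_neq0.
  move=> t ht; have := h0 _ (kmodR e CK ht).
  by rewrite scalerA tofracM fld13 // tofrac_eq0.
have Sx : forall x, x \in xs -> S x.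
  move=> x hx; have [u0 [n0 h0]] := kle_norm (coef_kmod x AS) (H x hx).
  by exists u0; split => // t ht; exact: h0.
have Sa : S a.
  rewrite (@coord_span _ _ _ (in_tuple xs) a ha).
  apply: big_ind => //; move=> i _; apply: SZ; apply: Sx; apply: mem_nth.
  exact: ltn_ord.
have [u0 [n0 h0]] := Sa.
by exists u0%:F; split; [rewrite tofrac_eq0 | exact: h0].
Qed.

Lemma hom_kle n (A : vset R n) x y f : submod A -> hom A (hullv A x) f -> A y -> f y != 0 ->
  kle (coef A y) (coef A x).
Proof.
move=> AS hf Ay nfy; have [_ _ fH] := hf; have [_ [c ec]] := fH _ Ay.
exists c; split; first by apply: contraNneq nfy => c0; rewrite ec c0 scale0r.
move=> t At; have := fH _ At; rewrite (hom_scale hf AS Ay At) ec scalerA => [[h _]].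
by rewrite /coef mulrC.
Qed.

End Main2.

Section Main3.
Variable R : idomainType.
Local Notation K := {fraction R}.
Local Notation "x %:F" := (@tofrac R x).

Lemma b_to_c n (A : vset R n) : submod A -> (exists a, A a /\ a != 0) ->
  (forall P, pure_in P A -> rank1 P -> generated_by A P) ->
  exists m (B : vset R m), [/\ rank1 B, quasi_summand A B & type_is_IT A B].
Proof.
move=> AS [a0 [Aa0 na0]] hb.
have [xs [xsA [frx spx]]] := max_free A.
have hull_gen : forall x, A x -> x != 0 ->
    exists f, hom A (hullv A x) f /\ exists a, A a /\ f a != 0.
  move=> x Ax nx; have hl := hull_line Ax nx.
  have G := hb _ (hull_pure x AS) (rank1_line (hull_submod x AS) hl).
  have [f [a [hf [Aa fa]]]] := gen_nonzero G hl.1 nx.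
  by exists f; split => //; exists a.
have [F hF] : exists F : 'rV[K]_n -> ('rV[K]_n -> 'rV[K]_n), forall x, x \in xs ->
    hom A (hullv A x) (F x) /\ exists a, A a /\ F x a != 0.
  apply: (choice_fun (Q := fun x f => x \in xs ->
    hom A (hullv A x) f /\ exists a, A a /\ f a != 0)) => x.
  case: (boolP (x \in xs)) => hx; last by exists id.
  have [f hf] := hull_gen x (xsA x hx) (free_not0 frx hx).
  by exists f.
pose fs := map F xs.
have Hfs : forall f, List.In f fs -> rlin A f /\ exists a, A a /\ f a != 0.
  move=> f hf; have [x [hx ->]] := In_map hf.
  have [h1 h2] := hF x (In_mem hx); split => //; exact: hom_rlin h1.
have Ht : forall z, A z -> (forall f, List.In f fs -> f z != 0) ->
    forall a, A a -> a != 0 -> kle (coef A z) (coef A a).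
  move=> z Az hz a Aa _; apply: (span_kle AS _ (spx a Aa)) => x hx.
  have [hf _] := hF x hx; apply: (hom_kle AS hf Az); apply: hz.
  by apply: In_map_f; apply: mem_In.
have [x0 hx0] : exists x0, x0 \in xs.
  case E : xs => [|x0 xs']; last by exists x0; rewrite inE eqxx.
  move: (spx a0 Aa0); rewrite E span_nil memv0 => /eqP a00.
  by move: na0; rewrite a00 eqxx.
have [hfx0 [a1 [Aa1 fa1]]] := hF x0 hx0.
have H0 : forall f, List.In f (F x0 :: fs) -> rlin A f /\ exists a, A a /\ f a != 0.
  move=> f [<-|h]; last exact: Hfs.
  by split; [exact: hom_rlin hfx0 | exists a1].
have [z [Az [gz zmin]]] := generic AS H0 Ht.
have nz : z != 0 by apply: contraNneq gz => ->; rewrite (hom0 hfx0 AS).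
have [f [hf [a2 [Aa2 fa2]]]] := hull_gen z Az nz.
have H1 : forall g, List.In g (f :: fs) -> rlin A g /\ exists a, A a /\ g a != 0.
  move=> g [<-|h]; last exact: Hfs.
  by split; [exact: hom_rlin hf | exists a2].
have [z2 [Az2 [fz2 z2min]]] := generic AS H1 Ht.
have nz2 : z2 != 0 by apply: contraNneq fz2 => ->; rewrite (hom0 hf AS).
have lineB := hull_line Az2 nz2.
have BS := hull_submod z2 AS.
exists n, (hullv A z2); split; first exact: rank1_line BS lineB.
- have [fD fS] := hom_rlin hf.
  have f0 := hom0 hf AS.
  have fB : forall x y, A x -> A y -> f (x - y) = f x - f y.
    move=> x y Ax Ay; have := fD (x - y) y (subB AS Ax Ay) Ay.
    by rewrite subrK => ->; rewrite addrK.
  pose C := fun x => A x /\ f x = 0.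
  have CS : submod C.
    split; first by split; [apply: sub0 | exact: f0].
    split; first by move=> x y [Ax fx] [Ay fy]; split; [apply: subD | rewrite fD // fx fy addr0].
    by move=> s x [Ax fx]; split; [apply: subS | rewrite /smul fS // fx scaler0].
  have [_ _ fH] := hf.
  have [_ [g eg]] := fH _ Az2.
  have ng : g != 0 by apply: contraNneq fz2 => g0; rewrite eg g0 scale0r.
  have [nn [nnn hnn]] := kle_norm (coef_kmod z2 AS) (zmin z2 Az2 nz2).
  have [g1 [g2 [ng2 eg12]]] := fracE g.
  have ng1 : g1 != 0 by apply: contraNneq ng => g10; rewrite eg12 g10 tofrac0 mul0r.
  pose r0 := nn * g1.
  have nr0 : r0 != 0 by rewrite mulf_neq0.
  have main : forall c, A c -> sum_set (hullv A z2) C (smul r0 c).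
    move=> c Ac; have [Afc [γ eγ]] := fH _ Ac.
    have Aγ : coef A z γ by rewrite /coef -eγ.
    pose β := (g2%:F * (nn%:F * γ)) *: z2.
    have Aβ : A β by rewrite /β -scalerA; apply: (subS _ AS); exact: (hnn γ Aγ).
    have Ar0c : A (smul r0 c) by apply: subS.
    exists β, (smul r0 c - β); split.
    + by split => //; exists (g2%:F * (nn%:F * γ)).
    + split; first by apply: subB.
      have hg2F : g2%:F != 0 by rewrite tofrac_eq0.
      rewrite fB // /smul fS // eγ (hom_scale hf AS Az2 Aβ) eg !scalerA.
      by rewrite /r0 tofracM eg12 (fld14 _ _ _ hg2F) subrr.
    + by rewrite addrC subrK.
  exists (hullv A z2), C; split => //.
  + by split => // x [].
  + by split => // x [].
  + move=> x [Ax [t ex]] [_ fx]; have At : A (t *: z2) by rewrite -ex.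
    move: fx; rewrite ex (hom_scale hf AS Az2 At) => /eqP.
    by rewrite scaler_eq0 (negbTE fz2) orbF => /eqP t0; rewrite t0 scale0r.
  + split.
      move=> x; split => [[c [a [Sa ->]]]|[c [a [Aa ->]]]].
        exists c, a; split => //; case: Sa => [b [d [[Ab _] [Ad _] ->]]]; exact: subD.
      exists (c / r0%:F), (smul r0 a); split; first exact: main.
      by rewrite /smul scalerA divfK // tofrac_eq0.
    exists r0, 1; split => //; first exact: oner_neq0.
    by move=> x [b [d [[Ab _] [Ad _] ->]]]; rewrite smul1; exact: subD.
  + have hid : hom (hullv A z2) (hullv A z2) id by split; move=> *.
    exists id, id, 1, 1; split; first by split => //; exact: oner_neq0.
    by split => x _; rewrite smul1.
- split; first exact: rank1_line BS lineB.
    move=> a Aa na; rewrite (elem_hullE AS Aa).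
    apply: (kle_tle BS (hull_submod a AS) lineB (hull_line Aa na)).
    apply: (kle_trans (kle_sub (D := coef (hullv A z2) z2) (E := coef A z2) _)).
      by move=> t /coef_hull.
    apply: (kle_trans (z2min a Aa na)); apply: kle_sub => t ht; exact/coef_hull.
  move=> m' C' C1 hC; rewrite -(elem_hullE AS Az2); exact: hC z2 Az2 nz2.
Qed.

End Main3.


Unset Implicit Arguments.

Theorem theorem2p4 (R : idomainType) (hR : dedekind R)
    (n : nat) (A : vset R n) (hA : submod A) (hA0 : exists a, A a /\ a != 0) :
  [<-> self_pure_generator A;
       forall P : vset R n, pure_in P A -> rank1 P -> generated_by A P;
       exists (m : nat) (B : vset R m), [/\ rank1 B, quasi_summand A B & type_is_IT A B];
       exists B : vset R n, [/\ rank1 B, direct_summand A B & type_is_IT A B]].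
Proof.
tfae => [ha|hb|hc|hd].
- by move=> P Pp _; exact: ha P Pp.
- exact: (@b_to_c R n A hA hA0 hb).
- exact: (@c_to_d R hR n A hA hc).
- exact: (@b_to_a R n A hA (@c_to_b R hR n A hA (@d_to_c R n A hA hd))).
Qed.
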